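(* Let a chemical reaction network satisfying (H1) and (H2) consist of exactly $N$ connected components, the $i$-th one ($1\le i\le N$) being \[ Y_i+S_{i,0}\rightleftarrows U_{i,1}\to Y_i+S_{i,1}\rightleftarrows\cdots\rightleftarrows U_{i,L_i}\to Y_i+S_{i,L_i}, \] with rate constants $a_{i,j}$ ($Y_i+S_{i,j-1}\to U_{i,j}$), $b_{i,j}$ ($U_{i,j}\to Y_i+S_{i,j-1}$), $c_{i,j}$ ($U_{i,j}\to Y_i+S_{i,j}$). Then the associated mass-action system is identifiable (all rate constants are identifiable) from the variables $s_{1,L_1},\dots,s_{N,L_N}$; moreover, for each $i$ it suffices to use the derivatives $s_{i,L_i}^{(\ell)}$ with $1\le\ell\le\max\{2,2L_i-1\}$.
   Context: Species are denoted by capital letters and their concentrations by the corresponding lower-case letters. A chemical reaction network is a finite directed graph whose vertices (complexes) are nonnegative integer combinations of species and whose edges $y\to y'$ (reactions) carry rate constants $k_{yy'}>0$; $\mathbf{k}$ denotes the vector of all rate constants. Under mass-action kinetics $\dot{\mathbf{x}}=\sum_{y\to y'}k_{yy'}\mathbf{x}^y(y'-y)$. For a polynomial $\varphi(\mathbf{x})$, $\dot\varphi=\sum_i \frac{\partial\varphi}{\partial x_i}\dot x_i$ with $\dot x_i$ replaced by the right-hand side; $\varphi^{(\ell)}$ is the $\ell$-th iterate; it is a polynomial in $\mathbf{x}$ with coefficients polynomial in $\mathbf{k}$. Identifiability: a map $\psi$ on $\mathbb{R}_{>0}^{\#\text{reactions}}$ is identifiable from variables $x_{i_1},\dots,x_{i_t}$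 using derivatives of orders $1\le\ell\le D$ if for all $\mathbf{k}^*,\mathbf{k}^{**}$, equality $x_{i_j}^{(\ell)}(\mathbf{x},\mathbf{k}^* )=x_{i_j}^{(\ell)}(\mathbf{x},\mathbf{k}^{**})$ as polynomials in $\mathbf{x}$ for all $1\le\ell\le D$, $1\le j\le t$ implies $\psi(\mathbf{k}^* )=\psi(\mathbf{k}^{**})$; the system is identifiable when this holds for $\psi=$ identity. Hypotheses. (H1) Every connected component has the form $Y+S_0\rightleftarrows U_1\to Y+S_1\rightleftarrows\cdots\rightleftarrows U_L\to Y+S_L$ (reactions $Y+S_{j-1}\to U_j$, $U_j\to Y+S_{j-1}$, $U_j\to Y+S_j$), with a unique enzyme $Y$; intermediate species $U_j$ are all distinct throughout the network; the non-intermediates $S_0,\dots,S_L$ of a component are pairwise distinct but may appear in other components (in any role); each complex lies in a unique component. For an intermediate $U$, $\mathscr{S}_U$ is the set of substrates/products of its component. (H2) The species admit a partition $\mathscr{S}^{(0)}\sqcup\cdots\sqcup\mathscr{S}^{(M)}$, $M\ge2$, nonempty parts, $\mathscr{S}^{(0)}$ = intermediates, such that for each intermediate $U$ with component enzyme $Y$ there is $\alpha\ge1$ with $\mathscr{S}_U\subseteq\mathscr{S}^{(\alpha)}$ and $Y\notin\mathscr{S}^{(\alpha)}$. *)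

(* Defs.v *)
From Stdlib Require Import Reals List Arith.
Import ListNotations.
Open Scope R_scope.

(** Species are natural numbers; species s has concentration variable x_s.
    A monomial is an exponent vector (list nat, missing entries = 0).
    A polynomial is a finite list of terms (coefficient, monomial); two
    polynomials are equal "as polynomials" iff all their coefficients agree. *)

Definition mon := list nat.
Definition mexp (m : mon) (s : nat) : nat := nth s m 0%nat.

Definition meqb (m1 m2 : mon) : bool :=
  forallb (fun s => Nat.eqb (mexp m1 s) (mexp m2 s))
          (seq 0 (Nat.max (length m1) (length m2))).

Definition madd (m1 m2 : mon) : mon :=
  map (fun s => (mexp m1 s + mexp m2 s)%nat) (seq 0 (Nat.max (length m1) (length m2))).

Definition munit (s : nat) : mon := repeat 0%nat s ++ [1%nat].

Definition mdec (m : mon) (s : nat) : mon :=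
  map (fun t => if Nat.eqb t s then (mexp m t - 1)%nat else mexp m t) (seq 0 (length m)).

Definition poly := list (R * mon).

Definition pcoef (p : poly) (m : mon) : R :=
  fold_right Rplus 0 (map (fun t => if meqb (snd t) m then fst t else 0) p).

Definition peq (p q : poly) : Prop := forall m : mon, pcoef p m = pcoef q m.

Definition pvar (s : nat) : poly := [(1, munit s)].

Definition pmul (p q : poly) : poly :=
  flat_map (fun t1 => map (fun t2 => (fst t1 * fst t2, madd (snd t1) (snd t2))) q) p.

Definition pderiv (s : nat) (p : poly) : poly :=
  map (fun t => (fst t * INR (mexp (snd t) s), mdec (snd t) s)) p.

(** * Mass-action kinetics.
    A reaction is (source complex y, target complex y', rate constant k). *)
Definition reaction := (mon * mon * R)%type.

(** right-hand side of  dx_s/dt = sum_{y -> y'} k x^y (y'_s - y_s) *)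
Definition rhs (rs : list reaction) (s : nat) : poly :=
  map (fun r => match r with (y, y', k) =>
         (k * (INR (mexp y' s) - INR (mexp y s)), y) end) rs.

(** Lie derivative  phi' = sum_s (d phi / d x_s) * xdot_s, summing over the
    species 0 .. nS-1 (nS bounds all species of the network). *)
Definition lie (nS : nat) (rs : list reaction) (p : poly) : poly :=
  flat_map (fun s => pmul (pderiv s p) (rhs rs s)) (seq 0 nS).

Fixpoint liter (nS : nat) (rs : list reaction) (l : nat) (p : poly) : poly :=
  match l with
  | O => p
  | S l' => lie nS rs (liter nS rs l' p)
  end.

(** Components i = 0..N-1 (paper: 1..N); component i has length L i, enzyme Y i,
    substrates/products S i 0, ..., S i (L i), intermediates U i 1, ..., U i (L i),
    and rate constants a i j (Y+S_{j-1} -> U_j), b i j (U_j -> Y+S_{j-1}),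
    c i j (U_j -> Y+S_j), for 1 <= j <= L i. *)

Definition cplx2 (y s : nat) : mon := madd (munit y) (munit s).

Definition comp_reactions (Y : nat) (S U : nat -> nat) (a b c : nat -> R) (L : nat)
  : list reaction :=
  flat_map (fun j =>
     [ (cplx2 Y (S (j - 1)%nat), munit (U j), a j);
       (munit (U j), cplx2 Y (S (j - 1)%nat), b j);
       (munit (U j), cplx2 Y (S j), c j) ]) (seq 1 L).

Definition network (N : nat) (L : nat -> nat) (Y : nat -> nat) (S U : nat -> nat -> nat)
  (a b c : nat -> nat -> R) : list reaction :=
  flat_map (fun i => comp_reactions (Y i) (S i) (U i) (a i) (b i) (c i) (L i)) (seq 0 N).

Definition is_intermediate (N : nat) (L : nat -> nat) (U : nat -> nat -> nat) (x : nat) : Prop :=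
  exists i j, (i < N)%nat /\ (1 <= j <= L i)%nat /\ x = U i j.

Definition is_species (N : nat) (L : nat -> nat) (Y : nat -> nat) (S U : nat -> nat -> nat)
  (x : nat) : Prop :=
  exists i, (i < N)%nat /\
    (x = Y i \/ (exists j, (j <= L i)%nat /\ x = S i j) \/
     (exists j, (1 <= j <= L i)%nat /\ x = U i j)).

Definition H1 (N : nat) (L : nat -> nat) (Y : nat -> nat) (S U : nat -> nat -> nat) : Prop :=
  (forall i, (i < N)%nat -> (1 <= L i)%nat) /\
  (forall i j i' j', (i < N)%nat -> (1 <= j <= L i)%nat ->
      (i' < N)%nat -> (1 <= j' <= L i')%nat -> U i j = U i' j' -> i = i' /\ j = j') /\
  (forall i j i', (i < N)%nat -> (1 <= j <= L i)%nat -> (i' < N)%nat ->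
      U i j <> Y i' /\ (forall j', (j' <= L i')%nat -> U i j <> S i' j')) /\
  (forall i j j', (i < N)%nat -> (j <= L i)%nat -> (j' <= L i)%nat ->
      S i j = S i j' -> j = j') /\
  (forall i j i' j', (i < N)%nat -> (j <= L i)%nat -> (i' < N)%nat -> (j' <= L i')%nat ->
      meqb (cplx2 (Y i) (S i j)) (cplx2 (Y i') (S i' j')) = true -> i = i').

Definition H2 (N : nat) (L : nat -> nat) (Y : nat -> nat) (S U : nat -> nat -> nat) : Prop :=
  exists (M : nat) (part : nat -> nat),
    (2 <= M)%nat /\
    (forall x, is_species N L Y S U x -> (part x <= M)%nat) /\
    (forall al, (al <= M)%nat -> exists x, is_species N L Y S U x /\ part x = al) /\
    (forall x, is_species N L Y S U x -> (part x = 0%nat <-> is_intermediate N L U x)) /\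
    (forall i, (i < N)%nat -> exists al, (1 <= al)%nat /\
        (forall j, (j <= L i)%nat -> part (S i j) = al) /\ part (Y i) <> al).

Definition pos_rates (N : nat) (L : nat -> nat) (a b c : nat -> nat -> R) : Prop :=
  forall i j, (i < N)%nat -> (1 <= j <= L i)%nat -> 0 < a i j /\ 0 < b i j /\ 0 < c i j.

(* Main.v *)
Require Import Defs.
From Stdlib Require Import Reals List Arith Lia Lra ZArith FunctionalExtensionality Classical.
Import ListNotations.
Open Scope R_scope.

Definition sumR {A} (l : list A) (f : A -> R) : R := fold_right Rplus 0 (map f l).

Lemma sumR_nil {A} (f : A -> R) : sumR [] f = 0.
Proof. reflexivity. Qed.
Lemma sumR_cons {A} x l (f:A->R) : sumR (x::l) f = f x + sumR l f.
Proof. reflexivity. Qed.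
Lemma sumR_app {A} l1 l2 (f : A -> R) : sumR (l1++l2) f = sumR l1 f + sumR l2 f.
Proof. induction l1; simpl; [unfold sumR; simpl; lra|]. rewrite !sumR_cons, IHl1. lra. Qed.
Lemma sumR_ext {A} l (f g : A -> R) : (forall x, In x l -> f x = g x) -> sumR l f = sumR l g.
Proof. induction l; intros H; [reflexivity|]. rewrite !sumR_cons, H, IHl; auto. intros; apply H; right; auto. left; auto. Qed.
Lemma sumR_zero {A} l (f:A->R) : (forall x, In x l -> f x = 0) -> sumR l f = 0.
Proof. induction l; intros H; [reflexivity|]. rewrite sumR_cons, H, IHl; [lra| |left;auto]. intros; apply H; right; auto. Qed.
Lemma sumR_plus {A} l (f g: A->R) : sumR l (fun x => f x + g x) = sumR l f + sumR l g.
Proof. induction l; [unfold sumR; simpl; lra|]. rewrite !sumR_cons, IHl. lra. Qed.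
Lemma sumR_scal {A} l (f : A -> R) c : sumR l (fun x => c * f x) = c * sumR l f.
Proof. induction l; [unfold sumR; simpl; lra|]. rewrite !sumR_cons, IHl. lra. Qed.
Lemma sumR_swap {A B} (l1 : list A) (l2 : list B) f :
  sumR l1 (fun x => sumR l2 (fun y => f x y)) = sumR l2 (fun y => sumR l1 (fun x => f x y)).
Proof. induction l1.
 - rewrite sumR_nil. symmetry. apply sumR_zero. intros; apply sumR_nil.
 - rewrite sumR_cons, IHl1. rewrite <- sumR_plus. apply sumR_ext. intros; rewrite sumR_cons; lra.
Qed.
Lemma sumR_flat_map {A B} (g : A -> list B) l f : sumR (flat_map g l) f = sumR l (fun x => sumR (g x) f).
Proof. induction l; [reflexivity|]. simpl. rewrite sumR_app, sumR_cons, IHl. reflexivity. Qed.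
Lemma sumR_map {A B} (h : A -> B) l f : sumR (map h l) f = sumR l (fun x => f (h x)).
Proof. unfold sumR. rewrite map_map. reflexivity. Qed.
Lemma sumR_single {A} (l: list A) f x0 : NoDup l -> In x0 l -> (forall x, In x l -> x <> x0 -> f x = 0) -> sumR l f = f x0.
Proof. induction l as [|a l IH]; intros Hnd Hin H; [destruct Hin|]. inversion Hnd; subst.
 rewrite sumR_cons. destruct (classic (a = x0)) as [->|Hne].
 - rewrite sumR_zero; [lra|]. intros x Hx. apply H; [right; auto|]. intros ->; contradiction.
 - destruct Hin as [->|Hin]; [congruence|]. rewrite H, IH; auto; [lra| |left;auto].
   intros; apply H; auto; right; auto.
Qed.

Lemma mexp_overflow m s : (length m <= s)%nat -> mexp m s = 0%nat.
Proof. intros; unfold mexp; apply nth_overflow; auto. Qed.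

Lemma mexp_mapseq g n s : mexp (map g (seq 0 n)) s = if (s <? n)%nat then g s else 0%nat.
Proof. unfold mexp. destruct (Nat.ltb_spec s n).
 - rewrite nth_indep with (d' := g 0%nat) by (rewrite length_map, length_seq; lia).
   rewrite map_nth, seq_nth by lia. reflexivity.
 - apply nth_overflow. rewrite length_map, length_seq; lia.
Qed.

Lemma meqb_spec m1 m2 : meqb m1 m2 = true <-> forall s, mexp m1 s = mexp m2 s.
Proof. unfold meqb; rewrite forallb_forall; split.
 - intros H s. destruct (Nat.lt_ge_cases s (Nat.max (length m1) (length m2))).
   + apply Nat.eqb_eq, H, in_seq; lia.
   + rewrite !mexp_overflow by lia. reflexivity.
 - intros H s _. apply Nat.eqb_eq, H.
Qed.

Lemma mexp_madd m1 m2 s : mexp (madd m1 m2) s = (mexp m1 s + mexp m2 s)%nat.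
Proof. unfold madd. rewrite mexp_mapseq. destruct (Nat.ltb_spec s (Nat.max (length m1) (length m2))); auto.
 rewrite !mexp_overflow by lia. reflexivity. Qed.

Lemma mexp_munit s t : mexp (munit s) t = if (t =? s)%nat then 1%nat else 0%nat.
Proof. unfold munit, mexp. revert t; induction s; intros t.
 - destruct t as [|[|t]]; reflexivity.
 - destruct t; [reflexivity|]. simpl. apply IHs.
Qed.

Lemma mexp_mdec m s t : mexp (mdec m s) t = if (t =? s)%nat then (mexp m t - 1)%nat else mexp m t.
Proof. unfold mdec. rewrite mexp_mapseq. destruct (Nat.ltb_spec t (length m)); auto.
 rewrite !mexp_overflow by lia. destruct (t =? s)%nat; reflexivity. Qed.

Lemma meqb_compat m0 m1 m2 : (forall s, mexp m1 s = mexp m2 s) -> meqb m0 m1 = meqb m0 m2.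
Proof. intros H. destruct (meqb m0 m1) eqn:E1, (meqb m0 m2) eqn:E2; auto.
 - rewrite meqb_spec in E1. assert (meqb m0 m2 = true) by (apply meqb_spec; intros; rewrite E1; auto). congruence.
 - rewrite meqb_spec in E2. assert (meqb m0 m1 = true) by (apply meqb_spec; intros; rewrite E2; auto). congruence.
Qed.

Lemma pcoef_ext p m1 m2 : (forall s, mexp m1 s = mexp m2 s) -> pcoef p m1 = pcoef p m2.
Proof. intros H. unfold pcoef. induction p; simpl; auto. rewrite IHp, (meqb_compat _ _ _ H). reflexivity. Qed.

Lemma pcoef_sumR p m : pcoef p m = sumR p (fun t => if meqb (snd t) m then fst t else 0).
Proof. reflexivity. Qed.

Definition msub (m y : mon) : mon := map (fun t => (mexp m t - mexp y t)%nat) (seq 0 (Nat.max (length m) (length y))).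
Lemma mexp_msub m y t : mexp (msub m y) t = (mexp m t - mexp y t)%nat.
Proof. unfold msub. rewrite mexp_mapseq. destruct (Nat.ltb_spec t (Nat.max (length m) (length y))); auto.
 rewrite !mexp_overflow by lia. reflexivity. Qed.
Definition mleb (y m : mon) : bool := forallb (fun t => (mexp y t <=? mexp m t)%nat) (seq 0 (length y)).
Lemma mleb_spec y m : mleb y m = true <-> forall t, (mexp y t <= mexp m t)%nat.
Proof. unfold mleb; rewrite forallb_forall; split.
 - intros H t. destruct (Nat.lt_ge_cases t (length y)).
   + apply Nat.leb_le, H, in_seq; lia.
   + rewrite (mexp_overflow y) by lia. lia.
 - intros H t _. apply Nat.leb_le, H.
Qed.

Lemma pcoef_flat_map {A} (g : A -> Defs.poly) l m : pcoef (flat_map g l) m = sumR l (fun x => pcoef (g x) m).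
Proof. rewrite pcoef_sumR, sumR_flat_map. reflexivity. Qed.

Lemma pcoef_pmul P Q m : pcoef (pmul P Q) m =
  sumR Q (fun t2 => fst t2 * (if mleb (snd t2) m then pcoef P (msub m (snd t2)) else 0)).
Proof. unfold pmul. rewrite pcoef_flat_map.
 rewrite (sumR_ext _ _ (fun t1 => sumR Q (fun t2 => if meqb (madd (snd t1) (snd t2)) m then fst t1 * fst t2 else 0))).
 2:{ intros t1 _. rewrite pcoef_sumR, sumR_map. reflexivity. }
 rewrite sumR_swap. apply sumR_ext. intros [c2 m2] _. simpl.
 destruct (mleb m2 m) eqn:Hle.
 - rewrite pcoef_sumR, <- sumR_scal. apply sumR_ext. intros [c1 m1] _. simpl.
   rewrite mleb_spec in Hle.
   destruct (meqb (madd m1 m2) m) eqn:E1, (meqb m1 (msub m m2)) eqn:E2; try lra.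
   + rewrite meqb_spec in E1. exfalso. assert (meqb m1 (msub m m2) = true); [|congruence].
     apply meqb_spec; intros s. rewrite mexp_msub, <- E1, mexp_madd. lia.
   + rewrite meqb_spec in E2. exfalso. assert (meqb (madd m1 m2) m = true); [|congruence].
     apply meqb_spec; intros s. rewrite mexp_madd, E2, mexp_msub. specialize (Hle s). lia.
 - rewrite Rmult_0_r. apply sumR_zero. intros [c1 m1] _. simpl.
   destruct (meqb (madd m1 m2) m) eqn:E1; auto.
   rewrite meqb_spec in E1. exfalso. assert (mleb m2 m = true); [|congruence].
   apply mleb_spec; intros s. rewrite <- E1, mexp_madd. lia.
Qed.

Lemma pcoef_pderiv s P m : pcoef (pderiv s P) m = INR (mexp m s + 1) * pcoef P (madd m (munit s)).
Proof. unfold pderiv. rewrite pcoef_sumR, sumR_map, pcoef_sumR, <- sumR_scal.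
 apply sumR_ext. intros [c m0] _. simpl.
 destruct (Nat.eq_dec (mexp m0 s) 0) as [Hz|Hnz].
 - rewrite Hz. destruct (meqb (mdec m0 s) m); [rewrite Rmult_0_r|];
   (destruct (meqb m0 (madd m (munit s))) eqn:E; [|lra]);
   rewrite meqb_spec in E; specialize (E s); rewrite mexp_madd, mexp_munit, Nat.eqb_refl in E; lia.
 - destruct (meqb (mdec m0 s) m) eqn:E1, (meqb m0 (madd m (munit s))) eqn:E2.
   + rewrite meqb_spec in E2. rewrite (E2 s), mexp_madd, mexp_munit, Nat.eqb_refl. lra.
   + exfalso. rewrite meqb_spec in E1. assert (meqb m0 (madd m (munit s)) = true); [|congruence].
     apply meqb_spec; intros t. rewrite mexp_madd, mexp_munit, <- E1, mexp_mdec.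
     destruct (Nat.eqb_spec t s); subst; lia.
   + exfalso. rewrite meqb_spec in E2. assert (meqb (mdec m0 s) m = true); [|congruence].
     apply meqb_spec; intros t. rewrite mexp_mdec, E2, mexp_madd, mexp_munit.
     destruct (Nat.eqb_spec t s); subst; lia.
   + lra.
Qed.

Lemma pcoef_lie nS rs P m : pcoef (lie nS rs P) m =
  sumR (seq 0 nS) (fun s => sumR rs (fun r => match r with (y, y', k) =>
     k * (INR (mexp y' s) - INR (mexp y s)) *
     (if mleb y m then INR (mexp (msub m y) s + 1) * pcoef P (madd (msub m y) (munit s)) else 0) end)).
Proof. unfold lie. rewrite pcoef_flat_map. apply sumR_ext. intros s _.
 rewrite pcoef_pmul. unfold rhs. rewrite sumR_map. apply sumR_ext. intros [[y y'] k] _. simpl.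
 rewrite pcoef_pderiv. reflexivity.
Qed.

Definition mof (n : nat) (f : nat -> nat) : mon := map f (seq 0 n).
Definition vanish (n : nat) (f : nat -> nat) := forall t, (n <= t)%nat -> f t = 0%nat.
Lemma mexp_mof n f t : vanish n f -> mexp (mof n f) t = f t.
Proof. intros H. unfold mof. rewrite mexp_mapseq. destruct (Nat.ltb_spec t n); auto. rewrite H; auto. Qed.

Lemma liter_succ_mof nS rs l P0 f : vanish nS f ->
  pcoef (liter nS rs (Datatypes.S l) P0) (mof nS f) =
  sumR (seq 0 nS) (fun s => sumR rs (fun r => match r with (y, y', k) =>
     k * (INR (mexp y' s) - INR (mexp y s)) *
     (if mleb y (mof nS f) then INR (f s - mexp y s + 1) *
        pcoef (liter nS rs l P0) (mof nS (fun t => (f t - mexp y t + (if (t =? s)%nat then 1 else 0))%nat)) else 0) end)).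
Proof. intros Hv. simpl. rewrite pcoef_lie. apply sumR_ext. intros s Hs. apply in_seq in Hs.
 apply sumR_ext. intros [[y y'] k] _.
 destruct (mleb y (mof nS f)); [|reflexivity].
 rewrite mexp_msub, mexp_mof by auto. f_equal. f_equal. apply pcoef_ext. intros t.
 rewrite mexp_madd, mexp_msub, mexp_munit, mexp_mof by auto. unfold mof. rewrite mexp_mapseq.
 destruct (Nat.ltb_spec t nS); auto. rewrite Hv by auto. destruct (Nat.eqb_spec t s); lia.
Qed.


Definition inc (f : nat -> nat) x : nat -> nat := fun t => if (t =? x)%nat then (f t + 1)%nat else f t.
Definition dec (f : nat -> nat) x : nat -> nat := fun t => if (t =? x)%nat then (f t - 1)%nat else f t.
Definition mono (Yy q h : nat) : nat -> nat :=
  fun t => if (t =? Yy)%nat then q else if (t =? h)%nat then 1%nat else 0%nat.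
Definition zf : nat -> nat := fun _ => 0%nat.
Definition isloc Yy (Sp Up : nat -> nat) L t :=
  t = Yy \/ (exists k, (k <= L)%nat /\ t = Sp k) \/ (exists k, (1 <= k <= L)%nat /\ t = Up k).
Definition pure Yy Sp Up L (f : nat -> nat) := forall t, f t <> 0%nat -> isloc Yy Sp Up L t.

Record CH (nS Yy : nat) (Sp Up : nat -> nat) (L : nat) : Prop := {
 chL : (1 <= L)%nat;
 chYS : forall k, (k <= L)%nat -> Sp k <> Yy;
 chYU : forall k, (1 <= k <= L)%nat -> Up k <> Yy;
 chSU : forall k k', (k <= L)%nat -> (1 <= k' <= L)%nat -> Sp k <> Up k';
 chSi : forall k k', (k <= L)%nat -> (k' <= L)%nat -> Sp k = Sp k' -> k = k';
 chUi : forall k k', (1<=k<=L)%nat -> (1<=k'<=L)%nat -> Up k = Up k' -> k = k';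
 chnY : (Yy < nS)%nat;
 chnS : forall k, (k <= L)%nat -> (Sp k < nS)%nat;
 chnU : forall k, (1 <= k <= L)%nat -> (Up k < nS)%nat }.

Definition RA Yy (Sp Up : nat -> nat) (a : nat -> R) (G : nat -> (nat -> nat) -> R) l f j :=
  if andb (1 <=? f Yy)%nat (1 <=? f (Sp (j-1)%nat))%nat then
    a j * (- INR (f Yy) * G l (dec f (Sp (j-1)%nat)) - INR (f (Sp (j-1)%nat)) * G l (dec f Yy)
           + INR (f (Up j) + 1) * G l (inc (dec (dec f Yy) (Sp (j-1)%nat)) (Up j)))
  else 0.
Definition RB Yy (Sp Up : nat -> nat) (b : nat -> R) (G : nat -> (nat -> nat) -> R) l f j :=
  if (1 <=? f (Up j))%nat then
    b j * (INR (f Yy + 1) * G l (inc (dec f (Up j)) Yy)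
           + INR (f (Sp (j-1)%nat) + 1) * G l (inc (dec f (Up j)) (Sp (j-1)%nat))
           - INR (f (Up j)) * G l f)
  else 0.
Definition RC Yy (Sp Up : nat -> nat) (c : nat -> R) (G : nat -> (nat -> nat) -> R) l f j :=
  if (1 <=? f (Up j))%nat then
    c j * (INR (f Yy + 1) * G l (inc (dec f (Up j)) Yy)
           + INR (f (Sp j) + 1) * G l (inc (dec f (Up j)) (Sp j))
           - INR (f (Up j)) * G l f)
  else 0.
Definition chainrec Yy Sp Up L a b c G l f :=
  sumR (seq 1 L) (fun j => RA Yy Sp Up a G l f j + RB Yy Sp Up b G l f j + RC Yy Sp Up c G l f j).

Definition wt (Sp Up : nat -> nat) L t : R :=
  sumR (seq 0 (Datatypes.S L)) (fun k => if (Sp k =? t)%nat then -2 * INR k else 0)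
  + sumR (seq 1 L) (fun k => if (Up k =? t)%nat then 1 - 2 * INR k else 0).
Definition Wt nS Sp Up L (f : nat -> nat) := sumR (seq 0 nS) (fun t => wt Sp Up L t * INR (f t)).


Lemma wt_S nS Yy Sp Up L k : CH nS Yy Sp Up L -> (k <= L)%nat -> wt Sp Up L (Sp k) = -2 * INR k.
Proof. intros H Hk. unfold wt.
 rewrite (sumR_single _ _ k); [|apply seq_NoDup|apply in_seq; lia|].
 - rewrite Nat.eqb_refl. rewrite sumR_zero; [lra|]. intros k' Hk'. apply in_seq in Hk'.
   destruct (Nat.eqb_spec (Up k') (Sp k)); auto. exfalso. apply (chSU _ _ _ _ _ H k k'); [lia|lia|auto].
 - intros k' Hk' Hne. apply in_seq in Hk'. destruct (Nat.eqb_spec (Sp k') (Sp k)); auto.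
   exfalso. apply Hne. apply (chSi _ _ _ _ _ H k' k); [lia|lia|auto].
Qed.

Lemma wt_U nS Yy Sp Up L k : CH nS Yy Sp Up L -> (1 <= k <= L)%nat -> wt Sp Up L (Up k) = 1 - 2 * INR k.
Proof. intros H Hk. unfold wt.
 rewrite (sumR_single (seq 1 L) _ k); [|apply seq_NoDup|apply in_seq; lia|].
 - rewrite Nat.eqb_refl. rewrite sumR_zero; [lra|]. intros k' Hk'. apply in_seq in Hk'.
   destruct (Nat.eqb_spec (Sp k') (Up k)); auto. exfalso. apply (chSU _ _ _ _ _ H k' k); [lia|lia|auto].
 - intros k' Hk' Hne. apply in_seq in Hk'. destruct (Nat.eqb_spec (Up k') (Up k)); auto.
   exfalso. apply Hne. apply (chUi _ _ _ _ _ H k' k); [lia|lia|auto].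
Qed.

Lemma wt_Y nS Yy Sp Up L : CH nS Yy Sp Up L -> wt Sp Up L Yy = 0.
Proof. intros H. unfold wt. rewrite !sumR_zero; [lra| |].
 - intros k' Hk'. apply in_seq in Hk'. destruct (Nat.eqb_spec (Up k') Yy); auto.
   exfalso; apply (chYU _ _ _ _ _ H k'); [lia|auto].
 - intros k' Hk'. apply in_seq in Hk'. destruct (Nat.eqb_spec (Sp k') Yy); auto.
   exfalso; apply (chYS _ _ _ _ _ H k'); [lia|auto].
Qed.

Lemma Wt_inc nS Sp Up L f x : (x < nS)%nat -> Wt nS Sp Up L (inc f x) = Wt nS Sp Up L f + wt Sp Up L x.
Proof. intros Hx. unfold Wt.
 rewrite (sumR_ext _ _ (fun t => wt Sp Up L t * INR (f t) + (if (t =? x)%nat then wt Sp Up L t else 0))).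
 - rewrite sumR_plus. f_equal. rewrite (sumR_single _ _ x); [rewrite Nat.eqb_refl; auto|apply seq_NoDup|apply in_seq; lia|].
   intros t _ Hne. destruct (Nat.eqb_spec t x); congruence.
 - intros t _. unfold inc. destruct (Nat.eqb_spec t x); [subst; rewrite plus_INR; simpl; lra| lra].
Qed.

Lemma Wt_dec nS Sp Up L f x : (x < nS)%nat -> (1 <= f x)%nat -> Wt nS Sp Up L (dec f x) = Wt nS Sp Up L f - wt Sp Up L x.
Proof. intros Hx Hf. unfold Wt.
 rewrite (sumR_ext _ _ (fun t => wt Sp Up L t * INR (f t) + (if (t =? x)%nat then - wt Sp Up L t else 0))).
 - rewrite sumR_plus. rewrite (sumR_single _ (fun t => if (t =? x)%nat then - wt Sp Up L t else 0) x);
     [rewrite Nat.eqb_refl; lra|apply seq_NoDup|apply in_seq; lia|].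
   intros t _ Hne. destruct (Nat.eqb_spec t x); congruence.
 - intros t _. unfold dec. destruct (Nat.eqb_spec t x); [subst; rewrite minus_INR by lia; simpl; lra| lra].
Qed.

Lemma Wt_mono nS Yy Sp Up L q h : CH nS Yy Sp Up L -> (h < nS)%nat -> h <> Yy ->
  Wt nS Sp Up L (mono Yy q h) = wt Sp Up L h.
Proof. intros H Hh Hne. unfold Wt.
 rewrite (sumR_single _ _ h); [|apply seq_NoDup|apply in_seq; lia|].
 - unfold mono. rewrite Nat.eqb_refl. destruct (Nat.eqb_spec h Yy); [congruence|]. simpl. lra.
 - intros t _ Ht. unfold mono. destruct (Nat.eqb_spec t Yy).
   + subst. rewrite (wt_Y _ _ _ _ _ H). lra.
   + destruct (Nat.eqb_spec t h); [congruence|]. simpl; lra.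
Qed.

Lemma pure_dec Yy Sp Up L f x : pure Yy Sp Up L f -> pure Yy Sp Up L (dec f x).
Proof. intros H t Ht. apply H. unfold dec in Ht. destruct (t =? x)%nat; lia. Qed.
Lemma pure_inc Yy Sp Up L f x : pure Yy Sp Up L f -> isloc Yy Sp Up L x -> pure Yy Sp Up L (inc f x).
Proof. intros H Hx t Ht. unfold inc in Ht. destruct (Nat.eqb_spec t x); [subst; auto|]. apply H; auto. Qed.
Lemma pure_mono Yy Sp Up L q h : isloc Yy Sp Up L h -> pure Yy Sp Up L (mono Yy q h).
Proof. intros Hh t Ht. unfold mono in Ht. destruct (Nat.eqb_spec t Yy); [left; auto|].
 destruct (Nat.eqb_spec t h); [subst; auto|]. lia. Qed.
Lemma isloc_Y Yy Sp Up L : isloc Yy Sp Up L Yy. Proof. left; auto. Qed.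
Lemma isloc_S Yy Sp Up L k : (k <= L)%nat -> isloc Yy Sp Up L (Sp k). Proof. intros; right; left; eauto. Qed.
Lemma isloc_U Yy Sp Up L k : (1 <= k <= L)%nat -> isloc Yy Sp Up L (Up k). Proof. intros; right; right; eauto. Qed.

Definition Tst Yy (Sp Up : nat -> nat) L l :=
  if Nat.even l then mono Yy (Nat.div2 l) (Sp (L - Nat.div2 l)%nat) else mono Yy (Nat.div2 l) (Up (L - Nat.div2 l)%nat).
Fixpoint pic (a c : nat -> R) L l := match l with
  | O => 1
  | Datatypes.S l' => pic a c L l' * (if Nat.even l' then c (L - Nat.div2 l')%nat else a (L - Nat.div2 l')%nat) end.
Definition top L l := -2 * INR L + INR l.

Ltac fe := let t := fresh "t" in extensionality t; unfold inc, dec, mono, zf;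
  repeat match goal with |- context [Nat.eqb ?x ?y] => destruct (Nat.eqb_spec x y) end;
  try subst t; try congruence; try lia.

Ltac pe := unfold inc, dec, mono;
  repeat match goal with |- context [Nat.eqb ?x ?y] => destruct (Nat.eqb_spec x y) end;
  try congruence; try lia.

Lemma Vstep nS Yy Sp Up L a b c G l :
  CH nS Yy Sp Up L ->
  (forall l f, pure Yy Sp Up L f -> G (Datatypes.S l) f = chainrec Yy Sp Up L a b c G l f) ->
  (forall f, pure Yy Sp Up L f -> Wt nS Sp Up L f > top L l -> G l f = 0) ->
  (forall f, pure Yy Sp Up L f -> Wt nS Sp Up L f > top L (Datatypes.S l) -> G (Datatypes.S l) f = 0).
Proof. intros H Hrec V f Hp HW. rewrite Hrec by auto. unfold chainrec. apply sumR_zero.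
 intros j Hj. apply in_seq in Hj.
 assert (hY : isloc Yy Sp Up L Yy) by apply isloc_Y.
 assert (hS1 : isloc Yy Sp Up L (Sp (j-1)%nat)) by (apply isloc_S; lia).
 assert (hS2 : isloc Yy Sp Up L (Sp j)) by (apply isloc_S; lia).
 assert (hU : isloc Yy Sp Up L (Up j)) by (apply isloc_U; lia).
 assert (nY := chnY _ _ _ _ _ H). assert (nS1 : (Sp (j-1) < nS)%nat) by (apply (chnS _ _ _ _ _ H); lia).
 assert (nS2 : (Sp j < nS)%nat) by (apply (chnS _ _ _ _ _ H); lia).
 assert (nU : (Up j < nS)%nat) by (apply (chnU _ _ _ _ _ H); lia).
 assert (wY := wt_Y _ _ _ _ _ H). assert (wS1 := wt_S _ _ _ _ _ (j-1) H ltac:(lia)).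
 assert (wS2 := wt_S _ _ _ _ _ j H ltac:(lia)). assert (wU := wt_U _ _ _ _ _ j H ltac:(lia)).
 assert (dYS1 : Sp (j-1)%nat <> Yy) by (apply (chYS _ _ _ _ _ H); lia).
 assert (dYU : Up j <> Yy) by (apply (chYU _ _ _ _ _ H); lia).
 assert (dSU : Sp (j-1)%nat <> Up j) by (apply (chSU _ _ _ _ _ H); lia).
 assert (Ij : INR (j - 1) = INR j - 1) by (rewrite minus_INR by lia; simpl; lra).
 assert (Ij0 : INR (j-1) >= 0) by (apply Rle_ge, pos_INR).
 unfold top in HW; rewrite S_INR in HW.
 assert (Vt : forall g, pure Yy Sp Up L g -> Wt nS Sp Up L g >= Wt nS Sp Up L f - 1 -> G l g = 0).
 { intros g Hg Hgw. apply V; auto. unfold top; lra. }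
 assert (B1 : (1 <= f (Up j))%nat -> G l (inc (dec f (Up j)) Yy) = 0 /\ G l (inc (dec f (Up j)) (Sp (j-1)%nat)) = 0
    /\ G l (inc (dec f (Up j)) (Sp j)) = 0 /\ G l f = 0).
 { intros GU. repeat split; apply Vt; try (apply pure_inc; [apply pure_dec|]; auto); auto;
   try (rewrite Wt_inc, Wt_dec by auto; lra). lra. }
 unfold RA, RB, RC.
 destruct (andb (1 <=? f Yy)%nat (1 <=? f (Sp (j-1)%nat))%nat) eqn:GA.
 - apply andb_prop in GA; destruct GA as [G1 G2]; apply Nat.leb_le in G1, G2.
   assert (A1 : G l (dec f (Sp (j-1)%nat)) = 0) by (apply Vt; [apply pure_dec; auto| rewrite Wt_dec by auto; lra]).
   assert (A2 : G l (dec f Yy) = 0) by (apply Vt; [apply pure_dec; auto| rewrite Wt_dec by auto; lra]).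
   assert (A3 : G l (inc (dec (dec f Yy) (Sp (j-1)%nat)) (Up j)) = 0).
   { apply Vt; [apply pure_inc; auto; apply pure_dec, pure_dec; auto|].
     rewrite Wt_inc by auto.
     rewrite (Wt_dec nS Sp Up L (dec f Yy) (Sp (j-1)%nat)); [| auto | unfold dec; destruct (Nat.eqb_spec (Sp (j-1)%nat) Yy); [congruence|lia]].
     rewrite (Wt_dec nS Sp Up L f Yy) by auto. lra. }
   rewrite A1, A2, A3.
   destruct (1 <=? f (Up j))%nat eqn:GU; [|lra].
   apply Nat.leb_le in GU. destruct (B1 GU) as (-> & -> & -> & ->). lra.
 - destruct (1 <=? f (Up j))%nat eqn:GU; [|lra].
   apply Nat.leb_le in GU. destruct (B1 GU) as (-> & -> & -> & ->). lra.
Qed.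

Definition gA Yy (Sp Up : nat -> nat) f j := inc (dec (dec f Yy) (Sp (j-1)%nat)) (Up j).
Definition gC (Sp Up : nat -> nat) f j := inc (dec f (Up j)) (Sp j).

Lemma Tred nS Yy Sp Up L a b c G l :
  CH nS Yy Sp Up L ->
  (forall l f, pure Yy Sp Up L f -> G (Datatypes.S l) f = chainrec Yy Sp Up L a b c G l f) ->
  (forall f, pure Yy Sp Up L f -> Wt nS Sp Up L f > top L l -> G l f = 0) ->
  forall f, pure Yy Sp Up L f -> Wt nS Sp Up L f = top L (Datatypes.S l) ->
  G (Datatypes.S l) f = sumR (seq 1 L) (fun j =>
     (if andb (1 <=? f Yy)%nat (1 <=? f (Sp (j-1)%nat))%nat then a j * INR (f (Up j) + 1) * G l (gA Yy Sp Up f j) else 0)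
   + (if (1 <=? f (Up j))%nat then c j * INR (f (Sp j) + 1) * G l (gC Sp Up f j) else 0)).
Proof. intros H Hrec V f Hp HW. rewrite Hrec by auto. unfold chainrec. apply sumR_ext.
 intros j Hj. apply in_seq in Hj.
 assert (hY : isloc Yy Sp Up L Yy) by apply isloc_Y.
 assert (hS1 : isloc Yy Sp Up L (Sp (j-1)%nat)) by (apply isloc_S; lia).
 assert (hS2 : isloc Yy Sp Up L (Sp j)) by (apply isloc_S; lia).
 assert (hU : isloc Yy Sp Up L (Up j)) by (apply isloc_U; lia).
 assert (nY := chnY _ _ _ _ _ H). assert (nS1 : (Sp (j-1) < nS)%nat) by (apply (chnS _ _ _ _ _ H); lia).
 assert (nS2 : (Sp j < nS)%nat) by (apply (chnS _ _ _ _ _ H); lia).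
 assert (nU : (Up j < nS)%nat) by (apply (chnU _ _ _ _ _ H); lia).
 assert (wY := wt_Y _ _ _ _ _ H). assert (wS1 := wt_S _ _ _ _ _ (j-1) H ltac:(lia)).
 assert (wS2 := wt_S _ _ _ _ _ j H ltac:(lia)). assert (wU := wt_U _ _ _ _ _ j H ltac:(lia)).
 assert (Ij : INR (j - 1) = INR j - 1) by (rewrite minus_INR by lia; simpl; lra).
 assert (Ij0 : INR (j-1) >= 0) by (apply Rle_ge, pos_INR).
 assert (Ij1 : INR j >= 1) by (apply Rle_ge; replace 1 with (INR 1) by reflexivity; apply le_INR; lia).
 unfold top in HW; rewrite S_INR in HW.
 assert (Vt : forall g, pure Yy Sp Up L g -> Wt nS Sp Up L g >= Wt nS Sp Up L f -> G l g = 0).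
 { intros g Hg Hgw. apply V; auto. unfold top; lra. }
 assert (B1 : (1 <= f (Up j))%nat -> G l (inc (dec f (Up j)) Yy) = 0 /\ G l (inc (dec f (Up j)) (Sp (j-1)%nat)) = 0
    /\ G l f = 0).
 { intros GU. repeat split; apply Vt; try (apply pure_inc; [apply pure_dec|]; auto); auto;
   try (rewrite Wt_inc, Wt_dec by auto; lra). lra. }
 unfold RA, RB, RC, gA, gC.
 destruct (andb (1 <=? f Yy)%nat (1 <=? f (Sp (j-1)%nat))%nat) eqn:GA.
 - apply andb_prop in GA; destruct GA as [G1 G2]; apply Nat.leb_le in G1, G2.
   assert (A1 : G l (dec f (Sp (j-1)%nat)) = 0) by (apply Vt; [apply pure_dec; auto| rewrite Wt_dec by auto; lra]).
   assert (A2 : G l (dec f Yy) = 0) by (apply Vt; [apply pure_dec; auto| rewrite Wt_dec by auto; lra]).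
   rewrite A1, A2.
   destruct (1 <=? f (Up j))%nat eqn:GU; [|lra].
   apply Nat.leb_le in GU. destruct (B1 GU) as (-> & -> & ->). lra.
 - destruct (1 <=? f (Up j))%nat eqn:GU; [|lra].
   apply Nat.leb_le in GU. destruct (B1 GU) as (-> & -> & ->). lra.
Qed.

Lemma Wt_gA nS Yy Sp Up L f j : CH nS Yy Sp Up L -> (1 <= j <= L)%nat -> (1 <= f Yy)%nat -> (1 <= f (Sp (j-1)%nat))%nat ->
  Wt nS Sp Up L (gA Yy Sp Up f j) = Wt nS Sp Up L f - 1.
Proof. intros H Hj G1 G2. unfold gA.
 assert (nY := chnY _ _ _ _ _ H). assert (nS1 : (Sp (j-1) < nS)%nat) by (apply (chnS _ _ _ _ _ H); lia).
 assert (nU : (Up j < nS)%nat) by (apply (chnU _ _ _ _ _ H); lia).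
 assert (wY := wt_Y _ _ _ _ _ H). assert (wS1 := wt_S _ _ _ _ _ (j-1) H ltac:(lia)).
 assert (wU := wt_U _ _ _ _ _ j H ltac:(lia)).
 assert (dYS1 : Sp (j-1)%nat <> Yy) by (apply (chYS _ _ _ _ _ H); lia).
 assert (Ij : INR (j - 1) = INR j - 1) by (rewrite minus_INR by lia; simpl; lra).
 rewrite Wt_inc by auto.
 rewrite (Wt_dec nS Sp Up L (dec f Yy) (Sp (j-1)%nat)); [| auto | unfold dec; destruct (Nat.eqb_spec (Sp (j-1)%nat) Yy); [congruence|lia]].
 rewrite (Wt_dec nS Sp Up L f Yy) by auto. lra.
Qed.

Lemma Wt_gC nS Yy Sp Up L f j : CH nS Yy Sp Up L -> (1 <= j <= L)%nat -> (1 <= f (Up j))%nat ->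
  Wt nS Sp Up L (gC Sp Up f j) = Wt nS Sp Up L f - 1.
Proof. intros H Hj G1. unfold gC.
 assert (nS2 : (Sp j < nS)%nat) by (apply (chnS _ _ _ _ _ H); lia).
 assert (nU : (Up j < nS)%nat) by (apply (chnU _ _ _ _ _ H); lia).
 assert (wS2 := wt_S _ _ _ _ _ j H ltac:(lia)). assert (wU := wt_U _ _ _ _ _ j H ltac:(lia)).
 rewrite Wt_inc, Wt_dec by auto. lra.
Qed.

Lemma Tst_even Yy Sp Up L q : Tst Yy Sp Up L (2*q) = mono Yy q (Sp (L - q)%nat).
Proof. unfold Tst. rewrite Nat.even_even, Nat.div2_double. reflexivity. Qed.
Lemma Tst_odd Yy Sp Up L q : Tst Yy Sp Up L (Datatypes.S (2*q)) = mono Yy q (Up (L - q)%nat).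
Proof. unfold Tst. replace (Datatypes.S (2*q)) with (2*q+1)%nat by lia. rewrite Nat.even_odd.
 replace (2*q+1)%nat with (Datatypes.S (2*q)) by lia. rewrite Nat.div2_succ_double. reflexivity. Qed.
Lemma pic_S a c L l : pic a c L (Datatypes.S l) = pic a c L l * (if Nat.even l then c (L - Nat.div2 l)%nat else a (L - Nat.div2 l)%nat).
Proof. reflexivity. Qed.
Lemma pic_even a c L q : pic a c L (Datatypes.S (2*q)) = pic a c L (2*q) * c (L - q)%nat.
Proof. rewrite pic_S, Nat.even_even, Nat.div2_double. reflexivity. Qed.
Lemma pic_odd a c L q : pic a c L (Datatypes.S (Datatypes.S (2*q))) = pic a c L (Datatypes.S (2*q)) * a (L - q)%nat.
Proof. rewrite pic_S. replace (Datatypes.S (2*q)) with (2*q+1)%nat by lia. rewrite Nat.even_odd.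
 replace (2*q+1)%nat with (Datatypes.S (2*q)) by lia. rewrite Nat.div2_succ_double. reflexivity. Qed.

Definition Tprop nS Yy Sp Up L a c (G : nat -> (nat -> nat) -> R) l :=
  forall g, pure Yy Sp Up L g -> Wt nS Sp Up L g = top L l ->
   (g = Tst Yy Sp Up L l -> G l g = pic a c L l) /\ (g <> Tst Yy Sp Up L l -> G l g = 0).

Lemma gC_inv Sp Up f j : Sp j <> Up j -> (1 <= f (Up j))%nat -> f = inc (dec (gC Sp Up f j) (Sp j)) (Up j).
Proof. intros d G1. unfold gC. fe. Qed.
Lemma gA_inv Yy Sp Up f j : Sp (j-1)%nat <> Yy -> Up j <> Yy -> Sp (j-1)%nat <> Up j ->
  (1 <= f Yy)%nat -> (1 <= f (Sp (j-1)%nat))%nat ->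
  f = inc (inc (dec (gA Yy Sp Up f j) (Up j)) Yy) (Sp (j-1)%nat).
Proof. intros d1 d2 d3 G1 G2. unfold gA. fe. Qed.

Lemma Teven nS Yy Sp Up L a b c G q :
  CH nS Yy Sp Up L ->
  (forall l f, pure Yy Sp Up L f -> G (Datatypes.S l) f = chainrec Yy Sp Up L a b c G l f) ->
  (forall f, pure Yy Sp Up L f -> Wt nS Sp Up L f > top L (2*q) -> G (2*q)%nat f = 0) ->
  Tprop nS Yy Sp Up L a c G (2*q) -> (q < L)%nat ->
  Tprop nS Yy Sp Up L a c G (Datatypes.S (2*q)).
Proof. intros H Hrec V T Hq f Hp HW.
 rewrite Tst_odd, pic_even. set (k := (L - q)%nat). assert (Hk : (1 <= k <= L)%nat) by (unfold k; lia).
 rewrite (Tred nS Yy Sp Up L a b c G) by auto.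
 assert (Azero : forall j, In j (seq 1 L) -> (if andb (1 <=? f Yy)%nat (1 <=? f (Sp (j-1)%nat))%nat then a j * INR (f (Up j) + 1) * G (2*q)%nat (gA Yy Sp Up f j) else 0) = 0).
 { intros j Hj. apply in_seq in Hj.
   destruct (andb (1 <=? f Yy)%nat (1 <=? f (Sp (j-1)%nat))%nat) eqn:GA; [|auto].
   apply andb_prop in GA; destruct GA as [G1 G2]; apply Nat.leb_le in G1, G2.
   assert (P1 : pure Yy Sp Up L (gA Yy Sp Up f j)).
   { unfold gA. apply pure_inc; [apply pure_dec, pure_dec; auto|apply isloc_U; lia]. }
   assert (W1 : Wt nS Sp Up L (gA Yy Sp Up f j) = top L (2*q)).
   { rewrite Wt_gA by (auto; lia). unfold top in *. rewrite S_INR in HW. lra. }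
   destruct (T _ P1 W1) as [_ T2]. rewrite T2; [lra|].
   { rewrite Tst_even. fold k. intros E. apply (f_equal (fun g => g (Up j))) in E.
     unfold gA, inc, dec, mono in E.
     assert (Up j <> Yy) by (apply (chYU _ _ _ _ _ H); lia).
     assert (Sp k <> Up j) by (apply (chSU _ _ _ _ _ H); lia).
     assert (Sp (j-1)%nat <> Up j) by (apply (chSU _ _ _ _ _ H); lia).
     repeat match type of E with context [Nat.eqb ?x ?y] => destruct (Nat.eqb_spec x y) end; try congruence; lia. } }
 rewrite (sumR_ext _ _ (fun j => if (1 <=? f (Up j))%nat then c j * INR (f (Sp j) + 1) * G (2*q)%nat (gC Sp Up f j) else 0)).
 2:{ intros j Hj. rewrite Azero by auto. lra. }
 assert (dSUk : Sp k <> Up k) by (apply (chSU _ _ _ _ _ H); lia).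
 assert (dYUk : Up k <> Yy) by (apply (chYU _ _ _ _ _ H); lia).
 assert (dYSk : Sp k <> Yy) by (apply (chYS _ _ _ _ _ H); lia).
 split.
 - intros ->. rewrite (sumR_single _ _ k); [| apply seq_NoDup | apply in_seq; lia |].
   + assert (E1 : mono Yy q (Up k) (Up k) = 1%nat) by pe.
     rewrite E1. simpl (1 <=? 1)%nat. cbv iota.
     assert (E2 : mono Yy q (Up k) (Sp k) = 0%nat) by pe.
     rewrite E2. assert (E3 : gC Sp Up (mono Yy q (Up k)) k = Tst Yy Sp Up L (2*q)) by (rewrite Tst_even; fold k; unfold gC; fe).
     assert (P1 : pure Yy Sp Up L (gC Sp Up (mono Yy q (Up k)) k)) by (rewrite E3, Tst_even; apply pure_mono, isloc_S; lia).
     assert (W1 : Wt nS Sp Up L (gC Sp Up (mono Yy q (Up k)) k) = top L (2*q)).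
     { rewrite (Wt_gC nS Yy) by (auto; lia). unfold top in *. rewrite S_INR in HW. lra. }
     destruct (T _ P1 W1) as [T1 _].
     rewrite (T1 E3). simpl. lra.
   + intros j Hj Hne. apply in_seq in Hj.
     assert (Up j <> Yy) by (apply (chYU _ _ _ _ _ H); lia).
     assert (Up j <> Up k) by (intro E; apply Hne, (chUi _ _ _ _ _ H); auto; lia).
     assert (E1 : mono Yy q (Up k) (Up j) = 0%nat) by pe.
     rewrite E1. reflexivity.
 - intros Hne. apply sumR_zero. intros j Hj. apply in_seq in Hj.
   destruct (1 <=? f (Up j))%nat eqn:GU; [|auto]. apply Nat.leb_le in GU.
   assert (P1 : pure Yy Sp Up L (gC Sp Up f j)).
   { unfold gC. apply pure_inc; [apply pure_dec; auto|apply isloc_S; lia]. }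
   assert (W1 : Wt nS Sp Up L (gC Sp Up f j) = top L (2*q)).
   { rewrite (Wt_gC nS Yy) by (auto; lia). unfold top in *. rewrite S_INR in HW. lra. }
   destruct (T _ P1 W1) as [_ T2].
   { rewrite T2; [lra|]. intros E. apply Hne.
     assert (dSUj : Sp j <> Up j) by (apply (chSU _ _ _ _ _ H); lia).
     assert (Hjk : j = k).
     { apply (f_equal (fun g => g (Sp j))) in E. rewrite Tst_even in E. fold k in E.
       unfold gC, inc, dec, mono in E. rewrite Nat.eqb_refl in E.
       assert (Sp j <> Yy) by (apply (chYS _ _ _ _ _ H); lia).
       destruct (Nat.eqb_spec (Sp j) (Up j)); [congruence|].
       destruct (Nat.eqb_spec (Sp j) Yy); [congruence|].
       destruct (Nat.eqb_spec (Sp j) (Sp k)); [apply (chSi _ _ _ _ _ H); auto; lia| lia]. }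
     subst j. rewrite (gC_inv Sp Up f k) by auto. rewrite E, Tst_even. fold k. fe. }
Qed.

Lemma Todd nS Yy Sp Up L a b c G q :
  CH nS Yy Sp Up L ->
  (forall l f, pure Yy Sp Up L f -> G (Datatypes.S l) f = chainrec Yy Sp Up L a b c G l f) ->
  (forall f, pure Yy Sp Up L f -> Wt nS Sp Up L f > top L (Datatypes.S (2*q)) -> G (Datatypes.S (2*q))%nat f = 0) ->
  Tprop nS Yy Sp Up L a c G (Datatypes.S (2*q)) -> (q < L)%nat ->
  Tprop nS Yy Sp Up L a c G (Datatypes.S (Datatypes.S (2*q))).
Proof. intros H Hrec V T Hq f Hp HW.
 rewrite pic_odd. set (k := (L - q)%nat). assert (Hk : (1 <= k <= L)%nat) by (unfold k; lia).
 assert (ET : Tst Yy Sp Up L (Datatypes.S (Datatypes.S (2*q))) = mono Yy (Datatypes.S q) (Sp (k-1)%nat)).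
 { replace (Datatypes.S (Datatypes.S (2*q))) with (2 * Datatypes.S q)%nat by lia. rewrite Tst_even.
   replace (L - Datatypes.S q)%nat with (k - 1)%nat by (unfold k; lia). reflexivity. }
 rewrite ET.
 rewrite (Tred nS Yy Sp Up L a b c G) by auto.
 assert (Czero : forall j, In j (seq 1 L) -> (if (1 <=? f (Up j))%nat then c j * INR (f (Sp j) + 1) * G (Datatypes.S (2*q)) (gC Sp Up f j) else 0) = 0).
 { intros j Hj. apply in_seq in Hj.
   destruct (1 <=? f (Up j))%nat eqn:GU; [|auto]. apply Nat.leb_le in GU.
   assert (P1 : pure Yy Sp Up L (gC Sp Up f j)).
   { unfold gC. apply pure_inc; [apply pure_dec; auto|apply isloc_S; lia]. }
   assert (W1 : Wt nS Sp Up L (gC Sp Up f j) = top L (Datatypes.S (2*q))).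
   { rewrite (Wt_gC nS Yy) by (auto; lia). unfold top in *. rewrite S_INR in HW. lra. }
   destruct (T _ P1 W1) as [_ T2]. rewrite T2; [lra|].
   rewrite Tst_odd. fold k. intros E. apply (f_equal (fun g => g (Sp j))) in E.
   unfold gC, inc, dec, mono in E.
   assert (Sp j <> Yy) by (apply (chYS _ _ _ _ _ H); lia).
   assert (Sp j <> Up k) by (apply (chSU _ _ _ _ _ H); lia).
   assert (Sp j <> Up j) by (apply (chSU _ _ _ _ _ H); lia).
   repeat match type of E with context [Nat.eqb ?x ?y] => destruct (Nat.eqb_spec x y) end; try congruence; lia. }
 rewrite (sumR_ext _ _ (fun j => if andb (1 <=? f Yy)%nat (1 <=? f (Sp (j-1)%nat))%nat then a j * INR (f (Up j) + 1) * G (Datatypes.S (2*q)) (gA Yy Sp Up f j) else 0)).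
 2:{ intros j Hj. rewrite Czero by auto. lra. }
 assert (dSUk : Sp (k-1)%nat <> Up k) by (apply (chSU _ _ _ _ _ H); lia).
 assert (dYUk : Up k <> Yy) by (apply (chYU _ _ _ _ _ H); lia).
 assert (dYSk : Sp (k-1)%nat <> Yy) by (apply (chYS _ _ _ _ _ H); lia).
 split.
 - intros ->. rewrite (sumR_single _ _ k); [| apply seq_NoDup | apply in_seq; lia |].
   + assert (E1 : mono Yy (Datatypes.S q) (Sp (k-1)%nat) Yy = Datatypes.S q) by pe.
     assert (E1' : mono Yy (Datatypes.S q) (Sp (k-1)%nat) (Sp (k-1)%nat) = 1%nat) by pe.
     rewrite E1, E1'. simpl (1 <=? 1)%nat. simpl (1 <=? Datatypes.S q)%nat. cbv iota. simpl andb. cbv iota.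
     assert (E2 : mono Yy (Datatypes.S q) (Sp (k-1)%nat) (Up k) = 0%nat) by pe.
     rewrite E2. assert (E3 : gA Yy Sp Up (mono Yy (Datatypes.S q) (Sp (k-1)%nat)) k = Tst Yy Sp Up L (Datatypes.S (2*q))) by (rewrite Tst_odd; fold k; unfold gA; fe).
     assert (P1 : pure Yy Sp Up L (gA Yy Sp Up (mono Yy (Datatypes.S q) (Sp (k-1)%nat)) k)) by (rewrite E3, Tst_odd; apply pure_mono, isloc_U; lia).
     assert (W1 : Wt nS Sp Up L (gA Yy Sp Up (mono Yy (Datatypes.S q) (Sp (k-1)%nat)) k) = top L (Datatypes.S (2*q))).
     { rewrite Wt_gA by (first [solve [auto] | lia | rewrite E1; lia | rewrite E1'; lia]). unfold top in *. rewrite !S_INR in *. lra. }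
     destruct (T _ P1 W1) as [T1 _].
     rewrite (T1 E3). simpl. lra.
   + intros j Hj Hne. apply in_seq in Hj.
     assert (Sp (j-1)%nat <> Yy) by (apply (chYS _ _ _ _ _ H); lia).
     assert (Sp (j-1)%nat <> Sp (k-1)%nat) by (intro E; apply Hne; apply (chSi _ _ _ _ _ H) in E; lia).
     assert (E1 : mono Yy (Datatypes.S q) (Sp (k-1)%nat) (Sp (j-1)%nat) = 0%nat) by pe.
     rewrite E1. rewrite Bool.andb_false_r. reflexivity.
 - intros Hne. apply sumR_zero. intros j Hj. apply in_seq in Hj.
   destruct (andb (1 <=? f Yy)%nat (1 <=? f (Sp (j-1)%nat))%nat) eqn:GA; [|auto].
   apply andb_prop in GA; destruct GA as [G1 G2]; apply Nat.leb_le in G1, G2.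
   assert (P1 : pure Yy Sp Up L (gA Yy Sp Up f j)).
   { unfold gA. apply pure_inc; [apply pure_dec, pure_dec; auto|apply isloc_U; lia]. }
   assert (W1 : Wt nS Sp Up L (gA Yy Sp Up f j) = top L (Datatypes.S (2*q))).
   { rewrite Wt_gA by (auto; lia). unfold top in *. rewrite !S_INR in *. lra. }
   destruct (T _ P1 W1) as [_ T2].
   rewrite T2; [lra|]. intros E. apply Hne.
   assert (d1 : Sp (j-1)%nat <> Yy) by (apply (chYS _ _ _ _ _ H); lia).
   assert (d2 : Up j <> Yy) by (apply (chYU _ _ _ _ _ H); lia).
   assert (d3 : Sp (j-1)%nat <> Up j) by (apply (chSU _ _ _ _ _ H); lia).
   assert (Hjk : j = k).
   { apply (f_equal (fun g => g (Up j))) in E. rewrite Tst_odd in E. fold k in E.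
     unfold gA, inc, dec, mono in E. rewrite Nat.eqb_refl in E.
     destruct (Nat.eqb_spec (Up j) Yy); [congruence|].
     destruct (Nat.eqb_spec (Up j) (Up k)); [apply (chUi _ _ _ _ _ H); auto; lia| lia]. }
   subst j. rewrite (gA_inv Yy Sp Up f k) by auto. rewrite E, Tst_odd. fold k. fe.
Qed.

Lemma VT nS Yy Sp Up L a b c G :
  CH nS Yy Sp Up L ->
  (forall l f, pure Yy Sp Up L f -> G (Datatypes.S l) f = chainrec Yy Sp Up L a b c G l f) ->
  G 0%nat (mono Yy 0 (Sp L)) = 1 ->
  (forall f, pure Yy Sp Up L f -> f <> mono Yy 0 (Sp L) -> G 0%nat f = 0) ->
  forall l, (forall f, pure Yy Sp Up L f -> Wt nS Sp Up L f > top L l -> G l f = 0) /\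
            ((l <= 2 * L)%nat -> Tprop nS Yy Sp Up L a c G l).
Proof. intros H Hrec H0a H0b.
 assert (dYSL : Sp L <> Yy) by (apply (chYS _ _ _ _ _ H); lia).
 assert (WsL : Wt nS Sp Up L (mono Yy 0 (Sp L)) = top L 0).
 { rewrite (Wt_mono nS Yy) by (auto; apply (chnS _ _ _ _ _ H); lia). rewrite (wt_S nS Yy) by auto. unfold top; simpl; lra. }
 induction l as [|l [IHV IHT]].
 - split.
   + intros f Hp HW. apply H0b; auto. intros ->. lra.
   + intros _ f Hp HW. unfold Tst. simpl Nat.even. cbv iota. simpl Nat.div2. rewrite Nat.sub_0_r. simpl pic.
     split; [intros ->; auto | apply H0b; auto].
 - split; [apply (Vstep nS Yy Sp Up L a b c G l); auto|].
   intros Hl. destruct (Nat.Even_or_Odd l) as [[q ->]|[q ->]].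
   + apply (Teven nS Yy Sp Up L a b c G q); auto. apply IHT. lia. lia.
   + replace (2 * q + 1)%nat with (Datatypes.S (2*q)) in * by lia.
     apply (Todd nS Yy Sp Up L a b c G q); auto. apply IHT. lia. lia.
Qed.

Ltac kill H := exfalso; first
 [ eapply (chYS _ _ _ _ _ H); [|eassumption]; lia
 | eapply (chYS _ _ _ _ _ H); [|symmetry; eassumption]; lia
 | eapply (chYU _ _ _ _ _ H); [|eassumption]; lia
 | eapply (chYU _ _ _ _ _ H); [|symmetry; eassumption]; lia
 | eapply (chSU _ _ _ _ _ H); [| |eassumption]; lia
 | eapply (chSU _ _ _ _ _ H); [| |symmetry; eassumption]; lia
 | match goal with e : ?F ?k = ?F ?k' |- _ =>
     first [ apply (chSi _ _ _ _ _ H k k') in e; [lia|lia|lia]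
           | apply (chUi _ _ _ _ _ H k k') in e; [lia|lia|lia] ] end ].

Ltac pk H := unfold inc, dec, mono, zf;
  repeat match goal with |- context [Nat.eqb ?x ?y] => destruct (Nat.eqb_spec x y); try (kill H) end;
  try congruence; try lia.
Ltac pkh H E := unfold inc, dec, mono, zf in E;
  repeat match type of E with context [Nat.eqb ?x ?y] => destruct (Nat.eqb_spec x y); try (kill H) end;
  try congruence; try lia.

Lemma neq_at (g h : nat -> nat) x : g x <> h x -> g <> h.
Proof. intros H E; subst; auto. Qed.

Lemma pure_zf Yy Sp Up L : pure Yy Sp Up L zf.
Proof. intros t Ht; unfold zf in Ht; lia. Qed.

Lemma G1full nS Yy Sp Up L a b c G :
  CH nS Yy Sp Up L ->
  (forall l f, pure Yy Sp Up L f -> G (Datatypes.S l) f = chainrec Yy Sp Up L a b c G l f) ->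
  G 0%nat (mono Yy 0 (Sp L)) = 1 ->
  (forall f, pure Yy Sp Up L f -> f <> mono Yy 0 (Sp L) -> G 0%nat f = 0) ->
  forall f, pure Yy Sp Up L f -> (f = mono Yy 0 (Up L) -> G 1%nat f = c L) /\ (f <> mono Yy 0 (Up L) -> G 1%nat f = 0).
Proof. intros H Hrec H0a H0b f Hp. assert (HL := chL _ _ _ _ _ H). split.
 - intros ->. destruct (VT nS Yy Sp Up L a b c G H Hrec H0a H0b 1) as [_ T].
   assert (ET : Tst Yy Sp Up L 1 = mono Yy 0 (Up L)) by (unfold Tst; simpl; rewrite Nat.sub_0_r; auto).
   destruct (T ltac:(lia) (mono Yy 0 (Up L))) as [T1 _].
   + apply pure_mono, isloc_U; lia.
   + rewrite (Wt_mono nS Yy) by (first [solve [auto] | apply (chnU _ _ _ _ _ H); lia | apply (chYU _ _ _ _ _ H); lia]).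
     rewrite (wt_U nS Yy) by (first [solve [auto]|lia]). unfold top. simpl. lra.
   + rewrite T1 by auto. simpl. rewrite Nat.sub_0_r. lra.
 - intros Hne. rewrite Hrec by auto. unfold chainrec. apply sumR_zero. intros j Hj. apply in_seq in Hj.
   unfold RA, RB, RC.
   assert (ZB : (1 <= f (Up j))%nat -> G 0%nat (inc (dec f (Up j)) Yy) = 0 /\ G 0%nat (inc (dec f (Up j)) (Sp (j-1)%nat)) = 0
      /\ G 0%nat f = 0 /\ G 0%nat (inc (dec f (Up j)) (Sp j)) = 0).
   { intros GU. split; [|split; [|split]]; apply H0b.
     - apply pure_inc; [apply pure_dec; auto| apply isloc_Y].
     - apply (neq_at _ _ Yy); pk H.
     - apply pure_inc; [apply pure_dec; auto| apply isloc_S; lia].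
     - apply (neq_at _ _ (Sp (j-1)%nat)); pk H.
     - auto.
     - apply (neq_at _ _ (Up j)); pk H.
     - apply pure_inc; [apply pure_dec; auto| apply isloc_S; lia].
     - intros E. apply Hne. rewrite (gC_inv Sp Up f j) by (auto; intro; kill H).
       change (inc (dec f (Up j)) (Sp j)) with (gC Sp Up f j) in E. rewrite E. assert (j = L).
       { apply (f_equal (fun g => g (Sp j))) in E. unfold gC in E. pkh H E; (apply (chSi _ _ _ _ _ H j L); [lia|lia|assumption]). }
       subst j. fe; kill H. }
   destruct (andb (1 <=? f Yy)%nat (1 <=? f (Sp (j-1)%nat))%nat) eqn:GA.
   + apply andb_prop in GA; destruct GA as [G1 G2]; apply Nat.leb_le in G1, G2.
     assert (Z1 : G 0%nat (dec f (Sp (j-1)%nat)) = 0) by (apply H0b; [apply pure_dec; auto | apply (neq_at _ _ Yy); pk H]).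
     assert (Z2 : G 0%nat (dec f Yy) = 0) by (apply H0b; [apply pure_dec; auto | apply (neq_at _ _ (Sp (j-1)%nat)); pk H]).
     assert (Z3 : G 0%nat (inc (dec (dec f Yy) (Sp (j-1)%nat)) (Up j)) = 0).
     { apply H0b; [apply pure_inc; [apply pure_dec, pure_dec; auto| apply isloc_U; lia]| apply (neq_at _ _ (Up j)); pk H]. }
     rewrite Z1, Z2, Z3.
     destruct (1 <=? f (Up j))%nat eqn:GU; [|lra]. apply Nat.leb_le in GU.
     destruct (ZB GU) as (-> & -> & -> & ->). lra.
   + destruct (1 <=? f (Up j))%nat eqn:GU; [|lra]. apply Nat.leb_le in GU.
     destruct (ZB GU) as (-> & -> & -> & ->). lra.
Qed.

Lemma G2full nS Yy Sp Up L a b c G :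
  CH nS Yy Sp Up L ->
  (forall l f, pure Yy Sp Up L f -> G (Datatypes.S l) f = chainrec Yy Sp Up L a b c G l f) ->
  G 0%nat (mono Yy 0 (Sp L)) = 1 ->
  (forall f, pure Yy Sp Up L f -> f <> mono Yy 0 (Sp L) -> G 0%nat f = 0) ->
  forall f, pure Yy Sp Up L f ->
   (f = mono Yy 1 (Sp (L-1)%nat) -> G 2%nat f = a L * c L) /\
   (f = mono Yy 0 (Up L) -> G 2%nat f = - (b L + c L) * c L) /\
   (f <> mono Yy 1 (Sp (L-1)%nat) -> f <> mono Yy 0 (Up L) -> G 2%nat f = 0).
Proof. intros H Hrec H0a H0b f Hp. assert (HL := chL _ _ _ _ _ H).
 assert (G1 := G1full nS Yy Sp Up L a b c G H Hrec H0a H0b).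
 assert (G1u : G 1%nat (mono Yy 0 (Up L)) = c L) by (apply G1; auto; apply pure_mono, isloc_U; lia).
 rewrite Hrec by auto. unfold chainrec.
 rewrite (sumR_ext _ _ (fun j =>
   (if andb (1 <=? f Yy)%nat (1 <=? f (Sp (j-1)%nat))%nat then a j * INR (f (Up j) + 1) * G 1%nat (gA Yy Sp Up f j) else 0)
   + (if (1 <=? f (Up j))%nat then - (b j + c j) * INR (f (Up j)) * G 1%nat f else 0))).
 2:{ intros j Hj. apply in_seq in Hj. unfold RA, RB, RC.
   assert (ZB : (1 <= f (Up j))%nat -> G 1%nat (inc (dec f (Up j)) Yy) = 0 /\ G 1%nat (inc (dec f (Up j)) (Sp (j-1)%nat)) = 0
      /\ G 1%nat (inc (dec f (Up j)) (Sp j)) = 0).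
   { intros GU. split; [|split]; apply G1.
     - apply pure_inc; [apply pure_dec; auto| apply isloc_Y].
     - apply (neq_at _ _ Yy); pk H.
     - apply pure_inc; [apply pure_dec; auto| apply isloc_S; lia].
     - apply (neq_at _ _ (Sp (j-1)%nat)); pk H.
     - apply pure_inc; [apply pure_dec; auto| apply isloc_S; lia].
     - apply (neq_at _ _ (Sp j)); pk H. }
   destruct (andb (1 <=? f Yy)%nat (1 <=? f (Sp (j-1)%nat))%nat) eqn:GA.
   + apply andb_prop in GA; destruct GA as [GA1 GA2]; apply Nat.leb_le in GA1, GA2.
     assert (Z1 : G 1%nat (dec f (Sp (j-1)%nat)) = 0) by (apply G1; [apply pure_dec; auto | apply (neq_at _ _ Yy); pk H]).
     assert (Z2 : G 1%nat (dec f Yy) = 0) by (apply G1; [apply pure_dec; auto | apply (neq_at _ _ (Sp (j-1)%nat)); pk H]).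
     rewrite Z1, Z2. unfold gA.
     destruct (1 <=? f (Up j))%nat eqn:GU; [|lra]. apply Nat.leb_le in GU.
     destruct (ZB GU) as (-> & -> & ->). lra.
   + destruct (1 <=? f (Up j))%nat eqn:GU; [|lra]. apply Nat.leb_le in GU.
     destruct (ZB GU) as (-> & -> & ->). lra. }
 assert (dUL : Up L <> Yy) by (apply (chYU _ _ _ _ _ H); lia).
 assert (dSL : Sp (L-1)%nat <> Yy) by (apply (chYS _ _ _ _ _ H); lia).
 assert (dSUL : Sp (L-1)%nat <> Up L) by (apply (chSU _ _ _ _ _ H); lia).
 split; [|split].
 - intros ->. rewrite (sumR_single _ _ L); [| apply seq_NoDup | apply in_seq; lia |].
   + assert (E1 : mono Yy 1 (Sp (L-1)%nat) Yy = 1%nat) by pk H.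
     assert (E2 : mono Yy 1 (Sp (L-1)%nat) (Sp (L-1)%nat) = 1%nat) by pk H.
     assert (E3 : mono Yy 1 (Sp (L-1)%nat) (Up L) = 0%nat) by pk H.
     rewrite E1, E2, E3. simpl (1 <=? 1)%nat. simpl (1 <=? 0)%nat. cbv iota. simpl andb. cbv iota.
     assert (E4 : gA Yy Sp Up (mono Yy 1 (Sp (L-1)%nat)) L = mono Yy 0 (Up L)) by (unfold gA; fe).
     rewrite E4, G1u. simpl. lra.
   + intros j Hj Hne. apply in_seq in Hj.
     assert (E3 : mono Yy 1 (Sp (L-1)%nat) (Up j) = 0%nat) by pk H.
     assert (E2 : mono Yy 1 (Sp (L-1)%nat) (Sp (j-1)%nat) = 0%nat) by pk H.
     rewrite E2, E3. rewrite Bool.andb_false_r. simpl (1 <=? 0)%nat. lra.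
 - intros ->. rewrite (sumR_single _ _ L); [| apply seq_NoDup | apply in_seq; lia |].
   + assert (E1 : mono Yy 0 (Up L) Yy = 0%nat) by pk H.
     assert (E3 : mono Yy 0 (Up L) (Up L) = 1%nat) by pk H.
     rewrite E1, E3. simpl (1 <=? 0)%nat. simpl (1 <=? 1)%nat. simpl andb. cbv iota. rewrite G1u. simpl. lra.
   + intros j Hj Hne. apply in_seq in Hj.
     assert (E1 : mono Yy 0 (Up L) Yy = 0%nat) by pk H.
     assert (E3 : mono Yy 0 (Up L) (Up j) = 0%nat) by pk H.
     rewrite E1, E3. simpl. lra.
 - intros Hn1 Hn2. apply sumR_zero. intros j Hj. apply in_seq in Hj.
   rewrite (proj2 (G1 f Hp) Hn2).
   destruct (andb (1 <=? f Yy)%nat (1 <=? f (Sp (j-1)%nat))%nat) eqn:GA.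
   2: { destruct (1 <=? f (Up j))%nat; lra. }
   apply andb_prop in GA; destruct GA as [GA1 GA2]; apply Nat.leb_le in GA1, GA2.
   rewrite (proj2 (G1 (gA Yy Sp Up f j) ltac:(unfold gA; apply pure_inc; [apply pure_dec, pure_dec; auto| apply isloc_U; lia]))).
   { destruct (1 <=? f (Up j))%nat; lra. }
   intros E. apply Hn1.
   assert (d1 : Sp (j-1)%nat <> Yy) by (apply (chYS _ _ _ _ _ H); lia).
   assert (d2 : Up j <> Yy) by (apply (chYU _ _ _ _ _ H); lia).
   assert (d3 : Sp (j-1)%nat <> Up j) by (apply (chSU _ _ _ _ _ H); lia).
   assert (Hjk : j = L).
   { apply (f_equal (fun g => g (Up j))) in E. unfold gA in E. pkh H E; (apply (chUi _ _ _ _ _ H j L); [lia|lia|assumption]). }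
   subst j. rewrite (gA_inv Yy Sp Up f L) by auto. rewrite E. fe.
Qed.

Lemma G2z nS Yy Sp Up L a b c G :
  CH nS Yy Sp Up L ->
  (forall l f, pure Yy Sp Up L f -> G (Datatypes.S l) f = chainrec Yy Sp Up L a b c G l f) ->
  G 0%nat (mono Yy 0 (Sp L)) = 1 ->
  (forall f, pure Yy Sp Up L f -> f <> mono Yy 0 (Sp L) -> G 0%nat f = 0) ->
  forall f x y, pure Yy Sp Up L f -> f x <> mono Yy 1 (Sp (L-1)%nat) x -> f y <> mono Yy 0 (Up L) y -> G 2%nat f = 0.
Proof. intros H Hrec H0a H0b f x y Hp Hx Hy. apply (G2full nS Yy Sp Up L a b c G H Hrec H0a H0b f Hp); eapply neq_at; eauto. Qed.

Lemma G3u nS Yy Sp Up L a b c G j :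
  CH nS Yy Sp Up L ->
  (forall l f, pure Yy Sp Up L f -> G (Datatypes.S l) f = chainrec Yy Sp Up L a b c G l f) ->
  G 0%nat (mono Yy 0 (Sp L)) = 1 ->
  (forall f, pure Yy Sp Up L f -> f <> mono Yy 0 (Sp L) -> G 0%nat f = 0) ->
  (2 <= L)%nat -> (1 <= j <= L)%nat ->
  G 3%nat (inc (inc zf (Up j)) (Sp (L-1)%nat)) = (b j + c j) * (a L * c L).
Proof. intros H Hrec H0a H0b HL Hj.
 assert (G2 := G2full nS Yy Sp Up L a b c G H Hrec H0a H0b).
 assert (Z := G2z nS Yy Sp Up L a b c G H Hrec H0a H0b).
 set (f := inc (inc zf (Up j)) (Sp (L-1)%nat)).
 assert (Hp : pure Yy Sp Up L f) by (apply pure_inc; [apply pure_inc; [apply pure_zf|apply isloc_U; lia]|apply isloc_S; lia]).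
 rewrite Hrec by auto. unfold chainrec.
 rewrite (sumR_single _ _ j); [| apply seq_NoDup | apply in_seq; lia |].
 - unfold RA, RB, RC.
   assert (E1 : f Yy = 0%nat) by (unfold f; pk H). assert (E2 : f (Up j) = 1%nat) by (unfold f; pk H).
   rewrite E1, E2. simpl (1 <=? 0)%nat. simpl (1 <=? 1)%nat. simpl andb. cbv iota.
   assert (E3 : inc (dec f (Up j)) Yy = mono Yy 1 (Sp (L-1)%nat))  by (unfold f; fe; kill H).
   rewrite E3, (proj1 (G2 (mono Yy 1 (Sp (L-1)%nat)) ltac:(apply pure_mono, isloc_S; lia)) eq_refl).
   rewrite (Z f Yy (Sp (L-1)%nat)) by (auto; unfold f; pk H).
   rewrite (Z (inc (dec f (Up j)) (Sp (j-1)%nat)) Yy (Sp (L-1)%nat)).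
   2: apply pure_inc; [apply pure_dec; auto|apply isloc_S; lia].
   2,3: unfold f; pk H.
   rewrite (Z (inc (dec f (Up j)) (Sp j)) Yy (Sp (L-1)%nat)).
   2: apply pure_inc; [apply pure_dec; auto|apply isloc_S; lia].
   2,3: unfold f; pk H.
   simpl. lra.
 - intros k Hk Hne. apply in_seq in Hk. unfold RA, RB, RC.
   assert (E1 : f Yy = 0%nat) by (unfold f; pk H). assert (E2 : f (Up k) = 0%nat) by (unfold f; pk H).
   rewrite E1, E2. simpl. lra.
Qed.

Lemma G3a nS Yy Sp Up L a b c G :
  CH nS Yy Sp Up L ->
  (forall l f, pure Yy Sp Up L f -> G (Datatypes.S l) f = chainrec Yy Sp Up L a b c G l f) ->
  G 0%nat (mono Yy 0 (Sp L)) = 1 ->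
  (forall f, pure Yy Sp Up L f -> f <> mono Yy 0 (Sp L) -> G 0%nat f = 0) ->
  (2 <= L)%nat ->
  G 3%nat (inc (inc (inc zf Yy) (Sp (L-1)%nat)) (Sp 0%nat)) = - a 1%nat * (a L * c L).
Proof. intros H Hrec H0a H0b HL.
 assert (G2 := G2full nS Yy Sp Up L a b c G H Hrec H0a H0b).
 assert (Z := G2z nS Yy Sp Up L a b c G H Hrec H0a H0b).
 set (f := inc (inc (inc zf Yy) (Sp (L-1)%nat)) (Sp 0%nat)).
 assert (Hp : pure Yy Sp Up L f) by (apply pure_inc; [apply pure_inc; [apply pure_inc; [apply pure_zf|apply isloc_Y]|apply isloc_S; lia]|apply isloc_S; lia]).
 rewrite Hrec by auto. unfold chainrec.
 assert (EU : forall k, (1 <= k <= L)%nat -> f (Up k) = 0%nat) by (intros; unfold f; pk H).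
 rewrite (sumR_single _ _ 1%nat); [| apply seq_NoDup | apply in_seq; lia |].
 - unfold RA, RB, RC. rewrite EU by lia. simpl (1 <=? 0)%nat. cbv iota. change (1-1)%nat with 0%nat.
   assert (E1 : f Yy = 1%nat) by (unfold f; pk H). assert (E2 : f (Sp 0%nat) = 1%nat) by (unfold f; pk H).
   rewrite E1, E2. simpl (1 <=? 1)%nat. simpl andb. cbv iota.
   assert (E3 : dec f (Sp 0%nat) = mono Yy 1 (Sp (L-1)%nat)) by (unfold f; fe; kill H).
   rewrite E3, (proj1 (G2 (mono Yy 1 (Sp (L-1)%nat)) ltac:(apply pure_mono, isloc_S; lia)) eq_refl).
   rewrite (Z (dec f Yy) Yy (Sp 0%nat)).
   2: apply pure_dec; auto.
   2,3: unfold f; pk H.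
   rewrite (Z (inc (dec (dec f Yy) (Sp 0%nat)) (Up 1%nat)) Yy (Sp (L-1)%nat)).
   2: apply pure_inc; [apply pure_dec, pure_dec; auto|apply isloc_U; lia].
   2,3: unfold f; pk H.
   simpl. lra.
 - intros k Hk Hne. apply in_seq in Hk. unfold RA, RB, RC. rewrite EU by lia. simpl (1 <=? 0)%nat. cbv iota.
   destruct (andb (1 <=? f Yy)%nat (1 <=? f (Sp (k-1)%nat))%nat) eqn:GA; [|lra].
   apply andb_prop in GA; destruct GA as [GA1 GA2]; apply Nat.leb_le in GA1, GA2.
   assert (Hk' : k = L) by (unfold f in GA2; revert GA2; pk H; intros;
        match goal with e : Sp _ = Sp _ |- _ => apply (chSi _ _ _ _ _ H) in e; lia end).
   subst k.
   rewrite (Z (dec f (Sp (L-1)%nat)) (Sp (L-1)%nat) Yy).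
   2: apply pure_dec; auto.
   2,3: unfold f; pk H.
   rewrite (Z (dec f Yy) Yy (Sp 0%nat)).
   2: apply pure_dec; auto.
   2,3: unfold f; pk H.
   rewrite (Z (inc (dec (dec f Yy) (Sp (L-1)%nat)) (Up L)) Yy (Sp 0%nat)).
   2: apply pure_inc; [apply pure_dec, pure_dec; auto|apply isloc_U; lia].
   2,3: unfold f; pk H.
   lra.
Qed.

Lemma chainval nS Yy Sp Up L a b c G m :
  CH nS Yy Sp Up L ->
  (forall l f, pure Yy Sp Up L f -> G (Datatypes.S l) f = chainrec Yy Sp Up L a b c G l f) ->
  G 0%nat (mono Yy 0 (Sp L)) = 1 ->
  (forall f, pure Yy Sp Up L f -> f <> mono Yy 0 (Sp L) -> G 0%nat f = 0) ->
  (m <= 2 * L)%nat -> (Nat.even m = false -> (m < 2 * L)%nat) ->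
  G m (Tst Yy Sp Up L m) = pic a c L m.
Proof. intros H Hrec H0a H0b Hm Hodd.
 destruct (VT nS Yy Sp Up L a b c G H Hrec H0a H0b m) as [_ T].
 assert (PW : pure Yy Sp Up L (Tst Yy Sp Up L m) /\ Wt nS Sp Up L (Tst Yy Sp Up L m) = top L m).
 { destruct (Nat.Even_or_Odd m) as [[q ->]|[q ->]].
 - rewrite Tst_even in *. split.
   + apply pure_mono, isloc_S; lia.
   + rewrite (Wt_mono nS Yy) by (first [solve [auto] | apply (chnS _ _ _ _ _ H); lia | apply (chYS _ _ _ _ _ H); lia]).
     rewrite (wt_S nS Yy) by (first [solve [auto]|lia]). unfold top. rewrite minus_INR by lia. rewrite mult_INR. simpl. lra.
 - replace (2 * q + 1)%nat with (Datatypes.S (2*q)) in * by lia. rewrite Tst_odd in *.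
   assert (q < L)%nat. {
     assert (Nat.even (Datatypes.S (2*q)) = false) by (replace (Datatypes.S (2*q)) with (2*q+1)%nat by lia; apply Nat.even_odd).
     specialize (Hodd H0). lia. }
   split.
   + apply pure_mono, isloc_U; lia.
   + rewrite (Wt_mono nS Yy) by (first [solve [auto] | apply (chnU _ _ _ _ _ H); lia | apply (chYU _ _ _ _ _ H); lia]).
     rewrite (wt_U nS Yy) by (first [solve [auto]|lia]). unfold top. rewrite minus_INR by lia. rewrite S_INR, mult_INR. simpl. lra. }
 destruct PW as [P W]. exact (proj1 (T Hm _ P W) eq_refl).
Qed.

Lemma pic_pos a c L m : (forall j, (1 <= j <= L)%nat -> 0 < a j /\ 0 < c j) -> (m <= 2 * L)%nat -> 0 < pic a c L m.
Proof. intros Hpos. induction m; intros Hm; simpl; [lra|].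
 apply Rmult_lt_0_compat; [apply IHm; lia|].
 destruct (Nat.Even_or_Odd m) as [[q ->]|[q ->]].
 - rewrite Nat.even_even, Nat.div2_double. apply Hpos; lia.
 - rewrite Nat.even_odd. replace (2*q+1)%nat with (Datatypes.S (2*q)) by lia. rewrite Nat.div2_succ_double. apply Hpos; lia.
Qed.

Lemma ident nS Yy Sp Up L a b c G a' b' c' G' :
  CH nS Yy Sp Up L ->
  (forall l f, pure Yy Sp Up L f -> G (Datatypes.S l) f = chainrec Yy Sp Up L a b c G l f) ->
  G 0%nat (mono Yy 0 (Sp L)) = 1 ->
  (forall f, pure Yy Sp Up L f -> f <> mono Yy 0 (Sp L) -> G 0%nat f = 0) ->
  (forall l f, pure Yy Sp Up L f -> G' (Datatypes.S l) f = chainrec Yy Sp Up L a' b' c' G' l f) ->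
  G' 0%nat (mono Yy 0 (Sp L)) = 1 ->
  (forall f, pure Yy Sp Up L f -> f <> mono Yy 0 (Sp L) -> G' 0%nat f = 0) ->
  (forall j, (1 <= j <= L)%nat -> 0 < a j /\ 0 < b j /\ 0 < c j) ->
  (forall j, (1 <= j <= L)%nat -> 0 < a' j /\ 0 < b' j /\ 0 < c' j) ->
  (forall l f, (1 <= l <= Nat.max 2 (2 * L - 1))%nat -> pure Yy Sp Up L f -> G l f = G' l f) ->
  forall j, (1 <= j <= L)%nat -> a j = a' j /\ b j = b' j /\ c j = c' j.
Proof. intros H Hrec H0a H0b Hrec' H0a' H0b' Hp Hp' Heq.
 assert (HL := chL _ _ _ _ _ H).
 assert (Hpc : forall j, (1 <= j <= L)%nat -> 0 < a j /\ 0 < c j) by (intros j Hj; destruct (Hp j Hj) as (? & ? & ?); auto).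
 assert (Hpc' : forall j, (1 <= j <= L)%nat -> 0 < a' j /\ 0 < c' j) by (intros j Hj; destruct (Hp' j Hj) as (? & ? & ?); auto).
 assert (Pe : forall m, (m <= 2 * L - 1)%nat -> pic a c L m = pic a' c' L m).
 { intros m Hm. destruct m as [|m']; [reflexivity|].
   rewrite <- (chainval nS Yy Sp Up L a b c G), <- (chainval nS Yy Sp Up L a' b' c' G'); auto; try lia.
   all: try (intros; lia).
   apply Heq; [lia|]. unfold Tst.
     pose proof (Nat.div2_odd (Datatypes.S m')) as Hd. destruct (Nat.odd (Datatypes.S m')); simpl Nat.b2n in Hd;
     destruct (Nat.even (Datatypes.S m')); apply pure_mono;
     first [apply isloc_S; lia | apply isloc_U; lia]. }
 assert (Hc : forall j, (1 <= j <= L)%nat -> c j = c' j).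
 { intros j Hj. set (q := (L - j)%nat).
   assert (E1 := pic_even a c L q). assert (E2 := pic_even a' c' L q).
   replace (L - q)%nat with j in E1, E2 by (unfold q; lia).
   rewrite (Pe (Datatypes.S (2*q))) in E1 by (unfold q; lia). rewrite (Pe (2*q)%nat) in E1 by (unfold q; lia).
   rewrite E1 in E2. apply Rmult_eq_reg_l in E2; auto.
   apply Rgt_not_eq, Rlt_gt, pic_pos; auto; unfold q; lia. }
 intros j Hj. split; [|split]; [| |apply Hc; auto].
 - destruct (Nat.eq_dec j 1) as [->|Hj1].
   + destruct (Nat.eq_dec L 1) as [HL1|HL1].
     *
       assert (E1 := pic_odd a c L 0). assert (E2 := pic_odd a' c' L 0).
       replace (L - 0)%nat with 1%nat in E1, E2 by lia. simpl (2 * 0)%nat in *.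
       assert (Q : pic a c L 2 = pic a' c' L 2).
       { rewrite <- (chainval nS Yy Sp Up L a b c G), <- (chainval nS Yy Sp Up L a' b' c' G'); auto; try lia.
         - apply Heq; [lia|]. unfold Tst. simpl. apply pure_mono, isloc_S; lia.
         - simpl; intros; discriminate.
         - simpl; intros; discriminate. }
       rewrite Q, (Pe 1%nat) in E1 by lia. rewrite E1 in E2. apply Rmult_eq_reg_l in E2; auto.
       apply Rgt_not_eq, Rlt_gt, pic_pos; auto; lia.
     * assert (E1 := G3a nS Yy Sp Up L a b c G H Hrec H0a H0b ltac:(lia)).
       assert (E2 := G3a nS Yy Sp Up L a' b' c' G' H Hrec' H0a' H0b' ltac:(lia)).
       assert (E3 := proj1 (G2full nS Yy Sp Up L a b c G H Hrec H0a H0b (mono Yy 1 (Sp (L-1)%nat)) ltac:(apply pure_mono, isloc_S; lia)) eq_refl).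
       assert (E4 := proj1 (G2full nS Yy Sp Up L a' b' c' G' H Hrec' H0a' H0b' (mono Yy 1 (Sp (L-1)%nat)) ltac:(apply pure_mono, isloc_S; lia)) eq_refl).
       rewrite Heq in E3 by (first [lia | apply pure_mono, isloc_S; lia]).
       rewrite Heq in E1; [| lia | apply pure_inc; [apply pure_inc; [apply pure_inc; [apply pure_zf|apply isloc_Y]|apply isloc_S; lia]|apply isloc_S; lia]].
       rewrite E1 in E2. rewrite E3 in E4. rewrite E4 in E2.
       assert (0 < a L * c L) by (destruct (Hpc L ltac:(lia)); apply Rmult_lt_0_compat; auto).
       apply Rmult_eq_reg_r in E2; [lra|]. lra.
   + set (q := (L - j)%nat).
     assert (E1 := pic_odd a c L q). assert (E2 := pic_odd a' c' L q).
     replace (L - q)%nat with j in E1, E2 by (unfold q; lia).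
     rewrite (Pe (Datatypes.S (Datatypes.S (2*q)))) in E1 by (unfold q; lia). rewrite (Pe (Datatypes.S (2*q))) in E1 by (unfold q; lia).
     rewrite E1 in E2. apply Rmult_eq_reg_l in E2; auto.
     apply Rgt_not_eq, Rlt_gt, pic_pos; auto; unfold q; lia.
 - assert (Hcj := Hc j Hj).
   destruct (Nat.eq_dec L 1) as [HL1|HL1].
   + assert (j = L) by lia. subst j.
     assert (E1 := proj1 (proj2 (G2full nS Yy Sp Up L a b c G H Hrec H0a H0b (mono Yy 0 (Up L)) ltac:(apply pure_mono, isloc_U; lia))) eq_refl).
     assert (E2 := proj1 (proj2 (G2full nS Yy Sp Up L a' b' c' G' H Hrec' H0a' H0b' (mono Yy 0 (Up L)) ltac:(apply pure_mono, isloc_U; lia))) eq_refl).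
     rewrite Heq in E1 by (first [lia | apply pure_mono, isloc_U; lia]). rewrite E1 in E2.
     rewrite Hcj in E2. destruct (Hpc' L ltac:(lia)) as [_ HcL].
     apply Rmult_eq_reg_r in E2; [lra|]. lra.
   + assert (E1 := G3u nS Yy Sp Up L a b c G j H Hrec H0a H0b ltac:(lia) Hj).
     assert (E2 := G3u nS Yy Sp Up L a' b' c' G' j H Hrec' H0a' H0b' ltac:(lia) Hj).
     assert (E3 := proj1 (G2full nS Yy Sp Up L a b c G H Hrec H0a H0b (mono Yy 1 (Sp (L-1)%nat)) ltac:(apply pure_mono, isloc_S; lia)) eq_refl).
     assert (E4 := proj1 (G2full nS Yy Sp Up L a' b' c' G' H Hrec' H0a' H0b' (mono Yy 1 (Sp (L-1)%nat)) ltac:(apply pure_mono, isloc_S; lia)) eq_refl).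
     rewrite Heq in E3 by (first [lia | apply pure_mono, isloc_S; lia]).
     rewrite Heq in E1; [| lia | apply pure_inc; [apply pure_inc; [apply pure_zf|apply isloc_U; lia]|apply isloc_S; lia]].
     rewrite E1 in E2. rewrite E3 in E4. rewrite E4 in E2.
     assert (0 < a' L * c' L) by (destruct (Hpc' L ltac:(lia)); apply Rmult_lt_0_compat; auto).
     apply Rmult_eq_reg_r in E2; [lra|]. lra.
Qed.


Definition phi nS (f : nat -> nat) (Gl : (nat -> nat) -> R) (s : nat) (r : reaction) : R :=
  match r with (y, y', k) => k * (INR (mexp y' s) - INR (mexp y s)) *
    (if mleb y (mof nS f) then INR (f s - mexp y s + 1) *
       Gl (fun t => (f t - mexp y t + (if (t =? s)%nat then 1 else 0))%nat) else 0) end.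

Lemma liter_succ_phi nS rs l P0 f : vanish nS f ->
  pcoef (liter nS rs (Datatypes.S l) P0) (mof nS f) =
  sumR rs (fun r => sumR (seq 0 nS) (fun s => phi nS f (fun g => pcoef (liter nS rs l P0) (mof nS g)) s r)).
Proof. intros Hv. rewrite liter_succ_mof by auto. rewrite sumR_swap. reflexivity. Qed.

Lemma mexp_cplx2 y s t : mexp (cplx2 y s) t = ((if (t =? y)%nat then 1 else 0) + (if (t =? s)%nat then 1 else 0))%nat.
Proof. unfold cplx2. rewrite mexp_madd, !mexp_munit. reflexivity. Qed.

Lemma sum3 n (g : nat -> R) x y z : x <> y -> x <> z -> y <> z -> (x < n)%nat -> (y < n)%nat -> (z < n)%nat ->
  (forall s, s <> x -> s <> y -> s <> z -> g s = 0) -> sumR (seq 0 n) g = g x + g y + g z.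
Proof. intros dxy dxz dyz hx hy hz H0.
 rewrite (sumR_ext _ _ (fun s => ((if (s =? x)%nat then g s else 0) + (if (s =? y)%nat then g s else 0)) + (if (s =? z)%nat then g s else 0))).
 - rewrite !sumR_plus.
   rewrite (sumR_single _ (fun s => if (s =? x)%nat then g s else 0) x); [|apply seq_NoDup|apply in_seq; lia|].
   2: { intros s _ Hs. destruct (Nat.eqb_spec s x); congruence. }
   rewrite (sumR_single _ (fun s => if (s =? y)%nat then g s else 0) y); [|apply seq_NoDup|apply in_seq; lia|].
   2: { intros s _ Hs. destruct (Nat.eqb_spec s y); congruence. }
   rewrite (sumR_single _ (fun s => if (s =? z)%nat then g s else 0) z); [|apply seq_NoDup|apply in_seq; lia|].
   2: { intros s _ Hs. destruct (Nat.eqb_spec s z); congruence. }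
   rewrite !Nat.eqb_refl. lra.
 - intros s _. destruct (Nat.eqb_spec s x), (Nat.eqb_spec s y), (Nat.eqb_spec s z); subst; try congruence; try lra.
   rewrite H0; auto; lra.
Qed.

Lemma comp_sum YY (SS UU : nat -> nat) a b c L (g : reaction -> R) :
  sumR (comp_reactions YY SS UU a b c L) g =
  sumR (seq 1 L) (fun j => g (cplx2 YY (SS (j - 1)%nat), munit (UU j), a j) + g (munit (UU j), cplx2 YY (SS (j - 1)%nat), b j)
                         + g (munit (UU j), cplx2 YY (SS j), c j)).
Proof. unfold comp_reactions. rewrite sumR_flat_map. apply sumR_ext. intros j _. rewrite !sumR_cons, sumR_nil. lra. Qed.

Lemma mleb_cplx2 nS f y s : vanish nS f -> y <> s ->
  mleb (cplx2 y s) (mof nS f) = andb (1 <=? f y)%nat (1 <=? f s)%nat.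
Proof. intros Hv d. apply Bool.eq_true_iff_eq. rewrite mleb_spec, Bool.andb_true_iff, !Nat.leb_le. split.
 - intros H. split.
   + specialize (H y). rewrite mexp_cplx2, mexp_mof in H by auto. rewrite Nat.eqb_refl in H. lia.
   + specialize (H s). rewrite mexp_cplx2, mexp_mof in H by auto. rewrite Nat.eqb_refl in H. lia.
 - intros [H1 H2] t. rewrite mexp_cplx2, mexp_mof by auto.
   destruct (Nat.eqb_spec t y), (Nat.eqb_spec t s); subst; try congruence; lia.
Qed.

Lemma mleb_munit nS f u : vanish nS f -> mleb (munit u) (mof nS f) = (1 <=? f u)%nat.
Proof. intros Hv. apply Bool.eq_true_iff_eq. rewrite mleb_spec, Nat.leb_le. split.
 - intros H. specialize (H u). rewrite mexp_munit, Nat.eqb_refl in H. rewrite mexp_mof in H by auto. lia.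
 - intros H t. rewrite mexp_munit, mexp_mof by auto. destruct (Nat.eqb_spec t u); subst; lia.
Qed.

Lemma termA nS f Gl Yv Sv Uv k : vanish nS f -> Yv <> Sv -> Yv <> Uv -> Sv <> Uv ->
  (Yv < nS)%nat -> (Sv < nS)%nat -> (Uv < nS)%nat ->
  sumR (seq 0 nS) (fun s => phi nS f Gl s (cplx2 Yv Sv, munit Uv, k)) =
  if andb (1 <=? f Yv)%nat (1 <=? f Sv)%nat then
    k * (- INR (f Yv) * Gl (dec f Sv) - INR (f Sv) * Gl (dec f Yv) + INR (f Uv + 1) * Gl (inc (dec (dec f Yv) Sv) Uv))
  else 0.
Proof. intros Hv d1 d2 d3 n1 n2 n3. rewrite (sum3 _ _ Yv Sv Uv); try assumption.
 2: { intros s h1 h2 h3. unfold phi. rewrite mexp_munit, mexp_cplx2.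
      destruct (Nat.eqb_spec s Uv), (Nat.eqb_spec s Yv), (Nat.eqb_spec s Sv); try congruence. simpl. lra. }
 unfold phi. rewrite (mleb_cplx2 nS) by auto.
 destruct (andb (1 <=? f Yv)%nat (1 <=? f Sv)%nat) eqn:GA; [|lra].
 apply Bool.andb_true_iff in GA; destruct GA as [G1 G2]; apply Nat.leb_le in G1, G2.
 rewrite !mexp_munit, !mexp_cplx2, !Nat.eqb_refl.
 destruct (Nat.eqb_spec Yv Uv), (Nat.eqb_spec Yv Sv), (Nat.eqb_spec Sv Uv), (Nat.eqb_spec Sv Yv), (Nat.eqb_spec Uv Yv), (Nat.eqb_spec Uv Sv); try congruence.
 replace (fun t => (f t - mexp (cplx2 Yv Sv) t + (if (t =? Yv)%nat then 1 else 0))%nat) with (dec f Sv).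
 2: { extensionality t. rewrite ?mexp_cplx2, ?mexp_munit. unfold dec. destruct (Nat.eqb_spec t Yv), (Nat.eqb_spec t Sv); subst; try congruence; lia. }
 replace (fun t => (f t - mexp (cplx2 Yv Sv) t + (if (t =? Sv)%nat then 1 else 0))%nat) with (dec f Yv).
 2: { extensionality t. rewrite ?mexp_cplx2, ?mexp_munit. unfold dec. destruct (Nat.eqb_spec t Yv), (Nat.eqb_spec t Sv); subst; try congruence; lia. }
 replace (fun t => (f t - mexp (cplx2 Yv Sv) t + (if (t =? Uv)%nat then 1 else 0))%nat) with (inc (dec (dec f Yv) Sv) Uv).
 2: { extensionality t. rewrite ?mexp_cplx2, ?mexp_munit. unfold inc, dec. destruct (Nat.eqb_spec t Yv), (Nat.eqb_spec t Sv), (Nat.eqb_spec t Uv); subst; try congruence; lia. }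
 replace (f Yv - (1 + 0) + 1)%nat with (f Yv) by lia.
 replace (f Sv - (0 + 1) + 1)%nat with (f Sv) by lia.
 replace (f Uv - (0 + 0) + 1)%nat with (f Uv + 1)%nat by lia.
 simpl INR. lra.
Qed.

Lemma termB nS f Gl Yv Sv Uv k : vanish nS f -> Yv <> Sv -> Yv <> Uv -> Sv <> Uv ->
  (Yv < nS)%nat -> (Sv < nS)%nat -> (Uv < nS)%nat ->
  sumR (seq 0 nS) (fun s => phi nS f Gl s (munit Uv, cplx2 Yv Sv, k)) =
  if (1 <=? f Uv)%nat then
    k * (INR (f Yv + 1) * Gl (inc (dec f Uv) Yv) + INR (f Sv + 1) * Gl (inc (dec f Uv) Sv) - INR (f Uv) * Gl f)
  else 0.
Proof. intros Hv d1 d2 d3 n1 n2 n3. rewrite (sum3 _ _ Yv Sv Uv); try assumption.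
 2: { intros s h1 h2 h3. unfold phi. rewrite mexp_munit, mexp_cplx2.
      destruct (Nat.eqb_spec s Uv), (Nat.eqb_spec s Yv), (Nat.eqb_spec s Sv); try congruence. simpl. lra. }
 unfold phi. rewrite (mleb_munit nS) by auto.
 destruct (1 <=? f Uv)%nat eqn:GU; [|lra]. apply Nat.leb_le in GU.
 rewrite !mexp_munit, !mexp_cplx2, !Nat.eqb_refl.
 destruct (Nat.eqb_spec Yv Uv), (Nat.eqb_spec Yv Sv), (Nat.eqb_spec Sv Uv), (Nat.eqb_spec Sv Yv), (Nat.eqb_spec Uv Yv), (Nat.eqb_spec Uv Sv); try congruence.
 replace (fun t => (f t - mexp (munit Uv) t + (if (t =? Yv)%nat then 1 else 0))%nat) with (inc (dec f Uv) Yv).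
 2: { extensionality t. rewrite ?mexp_cplx2, ?mexp_munit. unfold inc, dec. destruct (Nat.eqb_spec t Yv), (Nat.eqb_spec t Uv); subst; try congruence; lia. }
 replace (fun t => (f t - mexp (munit Uv) t + (if (t =? Sv)%nat then 1 else 0))%nat) with (inc (dec f Uv) Sv).
 2: { extensionality t. rewrite ?mexp_cplx2, ?mexp_munit. unfold inc, dec. destruct (Nat.eqb_spec t Sv), (Nat.eqb_spec t Uv); subst; try congruence; lia. }
 replace (fun t => (f t - mexp (munit Uv) t + (if (t =? Uv)%nat then 1 else 0))%nat) with f.
 2: { extensionality t. rewrite mexp_munit. destruct (Nat.eqb_spec t Uv); subst; lia. }
 replace (f Yv - 0 + 1)%nat with (f Yv + 1)%nat by lia.
 replace (f Sv - 0 + 1)%nat with (f Sv + 1)%nat by lia.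
 replace (f Uv - 1 + 1)%nat with (f Uv) by lia.
 simpl INR. lra.
Qed.

Lemma CH_net N L Y S U nS i :
  (forall x, is_species N L Y S U x -> (x < nS)%nat) -> H1 N L Y S U -> H2 N L Y S U -> (i < N)%nat ->
  CH nS (Y i) (S i) (U i) (L i).
Proof. intros HnS [h1 [h2 [h3 [h4 h5]]]] [M [part [hM [hb [hne [h0 hal]]]]]] Hi.
 destruct (hal i Hi) as [al [hal1 [hal2 hal3]]].
 constructor.
 - apply h1; auto.
 - intros k Hk E. apply hal3. rewrite <- E. apply hal2; auto.
 - intros k Hk. apply (h3 i k i); auto.
 - intros k k' Hk Hk' E. apply (proj2 (h3 i k' i Hi Hk' Hi) k Hk). auto.
 - intros k k' Hk Hk' E. apply (h4 i k k'); auto.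
 - intros k k' Hk Hk' E. apply (h2 i k i k'); auto.
 - apply HnS. exists i. split; auto.
 - intros k Hk. apply HnS. exists i. split; auto. right; left. exists k; auto.
 - intros k Hk. apply HnS. exists i. split; auto. right; right. exists k; auto.
Qed.

Lemma pure_vanish nS Yy Sp Up L f : CH nS Yy Sp Up L -> pure Yy Sp Up L f -> vanish nS f.
Proof. intros H Hp t Ht. destruct (Nat.eq_dec (f t) 0) as [|Hne]; auto. exfalso.
 destruct (Hp t Hne) as [->|[[k [Hk ->]]|[k [Hk ->]]]].
 - pose proof (chnY _ _ _ _ _ H). lia.
 - pose proof (chnS _ _ _ _ _ H k Hk). lia.
 - pose proof (chnU _ _ _ _ _ H k Hk). lia.
Qed.

Lemma other_A N L Y S U i i' j :
  H1 N L Y S U -> H2 N L Y S U -> (i < N)%nat -> (i' < N)%nat -> i' <> i -> (1 <= j <= L i')%nat ->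
  isloc (Y i) (S i) (U i) (L i) (Y i') -> isloc (Y i) (S i) (U i) (L i) (S i' (j-1)%nat) -> False.
Proof. intros [h1 [h2 [h3 [h4 h5]]]] [M [part [hM [hb [hne [h0 hal]]]]]] Hi Hi' Hne Hj HY HS.
 destruct (hal i Hi) as [al [hal1 [hal2 hal3]]].
 destruct (hal i' Hi') as [al' [hal1' [hal2' hal3']]].
 destruct HY as [EY|[[k [Hk EY]]|[k [Hk EY]]]];
 destruct HS as [ES|[[k' [Hk' ES]]|[k' [Hk' ES]]]].
 - apply hal3'. rewrite EY, <- ES. apply hal2'. lia.
 - apply Hne. apply (h5 i' (j-1)%nat i k'); auto; try lia.
   apply meqb_spec. intros t. rewrite EY, ES. reflexivity.
 - apply (proj2 (h3 i k' i' Hi Hk' Hi') (j-1)%nat); [lia|]. auto.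
 - apply Hne. apply (h5 i' (j-1)%nat i k); auto; try lia.
   apply meqb_spec. intros t. rewrite EY, ES. unfold cplx2. rewrite !mexp_madd. lia.
 - apply hal3'. rewrite EY. rewrite (hal2 k Hk). rewrite <- (hal2 k' Hk'). rewrite <- ES. apply hal2'. lia.
 - apply (proj2 (h3 i k' i' Hi Hk' Hi') (j-1)%nat); [lia|]. auto.
 - apply (proj1 (h3 i k i' Hi Hk Hi')). auto.
 - apply (proj1 (h3 i k i' Hi Hk Hi')). auto.
 - apply (proj1 (h3 i k i' Hi Hk Hi')). auto.
Qed.

Lemma other_U N L Y S U i i' j :
  H1 N L Y S U -> (i < N)%nat -> (i' < N)%nat -> i' <> i -> (1 <= j <= L i')%nat ->
  isloc (Y i) (S i) (U i) (L i) (U i' j) -> False.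
Proof. intros [h1 [h2 [h3 [h4 h5]]]] Hi Hi' Hne Hj HU.
 destruct HU as [E|[[k [Hk E]]|[k [Hk E]]]].
 - apply (proj1 (h3 i' j i Hi' Hj Hi)). auto.
 - apply (proj2 (h3 i' j i Hi' Hj Hi) k Hk). auto.
 - apply Hne. apply (h2 i' j i k); auto.
Qed.

Lemma mleb_true_ge y m t : mleb y m = true -> (1 <= mexp y t)%nat -> (1 <= mexp m t)%nat.
Proof. intros H Ht. rewrite mleb_spec in H. specialize (H t). lia. Qed.

Lemma net_rec N L Y S U nS a b c i P0 :
  (forall x, is_species N L Y S U x -> (x < nS)%nat) -> H1 N L Y S U -> H2 N L Y S U -> (i < N)%nat ->
  forall l f, pure (Y i) (S i) (U i) (L i) f ->
   pcoef (liter nS (network N L Y S U a b c) (Datatypes.S l) P0) (mof nS f) =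
   chainrec (Y i) (S i) (U i) (L i) (a i) (b i) (c i)
     (fun l g => pcoef (liter nS (network N L Y S U a b c) l P0) (mof nS g)) l f.
Proof. intros HnS HH1 HH2 Hi l f Hp.
 assert (H := CH_net N L Y S U nS i HnS HH1 HH2 Hi).
 assert (Hv := pure_vanish _ _ _ _ _ f H Hp).
 rewrite liter_succ_phi by auto. unfold network at 1. rewrite sumR_flat_map.
 rewrite (sumR_single _ _ i); [| apply seq_NoDup | apply in_seq; lia |].
 - rewrite comp_sum. unfold chainrec. apply sumR_ext. intros j Hj. apply in_seq in Hj.
   assert (d1 : Y i <> S i (j-1)%nat) by (intro E; symmetry in E; revert E; apply (chYS _ _ _ _ _ H); lia).
   assert (d1' : Y i <> S i j) by (intro E; symmetry in E; revert E; apply (chYS _ _ _ _ _ H); lia).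
   assert (d2 : Y i <> U i j) by (intro E; symmetry in E; revert E; apply (chYU _ _ _ _ _ H); lia).
   assert (d3 : S i (j-1)%nat <> U i j) by (apply (chSU _ _ _ _ _ H); lia).
   assert (d3' : S i j <> U i j) by (apply (chSU _ _ _ _ _ H); lia).
   assert (n1 := chnY _ _ _ _ _ H).
   assert (n2 : (S i (j-1) < nS)%nat) by (apply (chnS _ _ _ _ _ H); lia).
   assert (n2' : (S i j < nS)%nat) by (apply (chnS _ _ _ _ _ H); lia).
   assert (n3 : (U i j < nS)%nat) by (apply (chnU _ _ _ _ _ H); lia).
   rewrite termA, termB, termB by auto.
   unfold RA, RB, RC. reflexivity.
 - intros i' Hi' Hne. apply in_seq in Hi'. rewrite comp_sum. apply sumR_zero. intros j Hj. apply in_seq in Hj.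
   assert (ZU : mleb (munit (U i' j)) (mof nS f) = false).
   { destruct (mleb (munit (U i' j)) (mof nS f)) eqn:E; auto. exfalso.
     apply (other_U N L Y S U i i' j HH1 Hi ltac:(lia) Hne ltac:(lia)). apply Hp.
     assert (X := mleb_true_ge _ _ (U i' j) E). rewrite mexp_munit, Nat.eqb_refl, mexp_mof in X by auto. lia. }
   assert (ZA : mleb (cplx2 (Y i') (S i' (j - 1)%nat)) (mof nS f) = false).
   { destruct (mleb (cplx2 (Y i') (S i' (j - 1)%nat)) (mof nS f)) eqn:E; auto. exfalso.
     apply (other_A N L Y S U i i' j HH1 HH2 Hi ltac:(lia) Hne ltac:(lia)); apply Hp.
     - assert (X := mleb_true_ge _ _ (Y i') E). rewrite mexp_cplx2, Nat.eqb_refl, mexp_mof in X by auto. lia.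
     - assert (X := mleb_true_ge _ _ (S i' (j-1)%nat) E). rewrite mexp_cplx2, Nat.eqb_refl, mexp_mof in X by auto. lia. }
   rewrite !sumR_zero; [lra| | |]; intros s _; unfold phi; rewrite ?ZU, ?ZA; lra.
Qed.


Lemma base_coef nS Yy Sp Up L x f : CH nS Yy Sp Up L -> pure Yy Sp Up L f -> x <> Yy -> (x < nS)%nat ->
  pcoef (pvar x) (mof nS f) = if meqb (munit x) (mof nS f) then 1 else 0.
Proof. intros. unfold pcoef, pvar. simpl. lra. Qed.

Theorem mainTheorem2
  (N : nat) (L : nat -> nat) (Y : nat -> nat) (S U : nat -> nat -> nat) (nS : nat)
  (HnS : forall x, is_species N L Y S U x -> (x < nS)%nat)
  (HH1 : H1 N L Y S U) (HH2 : H2 N L Y S U) :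
  forall a b c a' b' c' : nat -> nat -> R,
    pos_rates N L a b c -> pos_rates N L a' b' c' ->
    (forall i l, (i < N)%nat -> (1 <= l <= Nat.max 2 (2 * L i - 1))%nat ->
       peq (liter nS (network N L Y S U a b c) l (pvar (S i (L i))))
           (liter nS (network N L Y S U a' b' c') l (pvar (S i (L i))))) ->
    forall i j, (i < N)%nat -> (1 <= j <= L i)%nat ->
      a i j = a' i j /\ b i j = b' i j /\ c i j = c' i j.
Proof.
  intros a b c a' b' c' Hp Hp' Heq i j Hi Hj.
  assert (H := CH_net N L Y S U nS i HnS HH1 HH2 Hi).
  assert (HL := chL _ _ _ _ _ H).
  assert (dx : S i (L i) <> Y i) by (apply (chYS _ _ _ _ _ H); lia).
  assert (nx : (S i (L i) < nS)%nat) by (apply (chnS _ _ _ _ _ H); lia).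
  assert (B0 : forall rs f, pure (Y i) (S i) (U i) (L i) f ->
     pcoef (liter nS rs 0 (pvar (S i (L i)))) (mof nS f) = if meqb (munit (S i (L i))) (mof nS f) then 1 else 0).
  { intros rs f Hf. simpl. unfold pcoef, pvar. simpl. lra. }
  assert (M1 : forall f, pure (Y i) (S i) (U i) (L i) f ->
     (meqb (munit (S i (L i))) (mof nS f) = true <-> f = mono (Y i) 0 (S i (L i)))).
  { intros f Hf. assert (Hv := pure_vanish _ _ _ _ _ f H Hf). rewrite meqb_spec. split.
    - intros E. extensionality t. specialize (E t). rewrite mexp_munit, mexp_mof in E by auto.
      rewrite <- E. unfold mono. destruct (Nat.eqb_spec t (Y i)), (Nat.eqb_spec t (S i (L i))); subst; congruence.
    - intros E t. rewrite mexp_munit, mexp_mof by auto. rewrite E.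
      unfold mono. destruct (Nat.eqb_spec t (Y i)), (Nat.eqb_spec t (S i (L i))); subst; congruence. }
  assert (Pm : pure (Y i) (S i) (U i) (L i) (mono (Y i) 0 (S i (L i)))) by (apply pure_mono, isloc_S; lia).
  set (G := fun l g => pcoef (liter nS (network N L Y S U a b c) l (pvar (S i (L i)))) (mof nS g)).
  set (G' := fun l g => pcoef (liter nS (network N L Y S U a' b' c') l (pvar (S i (L i)))) (mof nS g)).
  assert (R1 : forall l f, pure (Y i) (S i) (U i) (L i) f -> G (Datatypes.S l) f = chainrec (Y i) (S i) (U i) (L i) (a i) (b i) (c i) G l f).
  { intros l f Hf. apply net_rec; auto. }
  assert (R2 : forall l f, pure (Y i) (S i) (U i) (L i) f -> G' (Datatypes.S l) f = chainrec (Y i) (S i) (U i) (L i) (a' i) (b' i) (c' i) G' l f).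
  { intros l f Hf. apply net_rec; auto. }
  assert (A1 : G 0%nat (mono (Y i) 0 (S i (L i))) = 1).
  { unfold G. rewrite B0 by auto. destruct (meqb _ _) eqn:E; auto. exfalso. assert (X := proj2 (M1 _ Pm) eq_refl). congruence. }
  assert (A2 : G' 0%nat (mono (Y i) 0 (S i (L i))) = 1).
  { unfold G'. rewrite B0 by auto. destruct (meqb _ _) eqn:E; auto. exfalso. assert (X := proj2 (M1 _ Pm) eq_refl). congruence. }
  assert (Z1 : forall f, pure (Y i) (S i) (U i) (L i) f -> f <> mono (Y i) 0 (S i (L i)) -> G 0%nat f = 0).
  { intros f Hf Hne. unfold G. rewrite B0 by auto. destruct (meqb _ _) eqn:E; auto. exfalso. apply Hne, M1; auto. }
  assert (Z2 : forall f, pure (Y i) (S i) (U i) (L i) f -> f <> mono (Y i) 0 (S i (L i)) -> G' 0%nat f = 0).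
  { intros f Hf Hne. unfold G'. rewrite B0 by auto. destruct (meqb _ _) eqn:E; auto. exfalso. apply Hne, M1; auto. }
  assert (P1 : forall k, (1 <= k <= L i)%nat -> 0 < a i k /\ 0 < b i k /\ 0 < c i k) by (intros k Hk; exact (Hp i k Hi Hk)).
  assert (P2 : forall k, (1 <= k <= L i)%nat -> 0 < a' i k /\ 0 < b' i k /\ 0 < c' i k) by (intros k Hk; exact (Hp' i k Hi Hk)).
  assert (EQ : forall l f, (1 <= l <= Nat.max 2 (2 * L i - 1))%nat -> pure (Y i) (S i) (U i) (L i) f -> G l f = G' l f).
  { intros l f Hl Hf. unfold G, G'. apply Heq; auto. }
  exact (ident nS (Y i) (S i) (U i) (L i) (a i) (b i) (c i) G (a' i) (b' i) (c' i) G' H R1 A1 Z1 R2 A2 Z2 P1 P2 EQ j Hj).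
Qed.
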